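(* For $\tau=u+iv$ in the upper half-plane $\mathbb{H}$, with $q=e^{2\pi i\tau}$, define \[ H(q):=\sum_{n\ge 0}(-1)^nq^{3n^2+2n}\left(1+q^{2n+1}\right)\sum_{|j|\le n}(-1)^{j}q^{-j^2}, \] \[ H^{-}(\tau):=-\frac{1}{\sqrt{\pi}}\sum_{\varepsilon\in\{0,1\}}(-1)^{\varepsilon}\sum_{n,r\in \mathbb{Z}}\operatorname{sgn}\!\left(2r+\varepsilon+\tfrac 13\right)\Gamma\!\left(\tfrac 12,6\pi\left(2r+\varepsilon+\tfrac 13\right)^2v\right)q^{-\frac 32\left(2r+\varepsilon+\frac 13\right)^2+\frac 12\left(2n+\varepsilon+1\right)^2}, \] and $\widehat{H}(\tau):=q^{\frac13}H(q)+H^{-}(\tau)$. Let $Q(\mathbf{n}):=3n_1^2-n_2^2$ for $\mathbf{n}=(n_1,n_2)^T\in\mathbb{R}^2$, with associated bilinear form $B(\mathbf{x},\mathbf{y}):=Q(\mathbf{x}+\mathbf{y})-Q(\mathbf{x})-Q(\mathbf{y})=6x_1y_1-2x_2y_2$, and let $\mathbf{c_1}:=(1,3)^T$, $\mathbf{c_2}:=(-1,3)^T$, $\mathbf{a}:=(\frac13,0)^T$, $\mathbf{b}:=(\frac1{12},-\frac14)^T$. Define \[ \vartheta_{\mathbf{a},\mathbf{b}}(\tau):=\sum_{\mathbf{n}\in\mathbb{Z}^2+\mathbf{a}}\left(E\!\left(\frac{B(\mathbf{c_1},\mathbf{n})\sqrt v}{\sqrt{-Q(\mathbf{c_1})}}\right)-E\!\left(\frac{B(\mathbf{c_2},\mathbf{n})\sqrt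 v}{\sqrt{-Q(\mathbf{c_2})}}\right)\right)e^{2\pi i B(\mathbf{b},\mathbf{n})}q^{Q(\mathbf{n})}, \] where $E(w):=2\int_0^w e^{-\pi t^2}\,dt$. Then \[ \widehat{H}(\tau)=\frac{e^{-\frac{\pi i}{3}}}{2}\vartheta_{\mathbf{a},\mathbf{b}}(\tau). \]
   Context: For real $\alpha$, $q^{\alpha}:=e^{2\pi i\alpha\tau}$. $\Gamma(a,x):=\int_x^\infty e^{-t}t^{a-1}\,dt$ is the incomplete gamma function. $\operatorname{sgn}(x)=x/|x|$ for $x\ne0$ and $\operatorname{sgn}(0)=0$. Note $Q(\mathbf{c_1})=Q(\mathbf{c_2})=-6$. *)

(* Defs.v *)
From Stdlib Require Import Reals ZArith.
From Coquelicot Require Import Coquelicot.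
Open Scope R_scope.

Definition cexp (z : C) : C :=
  (exp (Re z) * cos (Im z), exp (Re z) * sin (Im z)).

Definition qpow (tau : C) (alpha : R) : C :=
  cexp (Cmult (RtoC (2 * PI * alpha)) (Cmult Ci tau)).

Definition sgn (x : R) : R :=
  if Rlt_dec 0 x then 1 else if Rlt_dec x 0 then -1 else 0.

Definition inc_gamma (a x : R) : R :=
  real (Lim (fun b => RInt (fun t => exp (- t) * Rpower t (a - 1)) x b) p_infty).

Definition Efun (w : R) : R := 2 * RInt (fun t => exp (- PI * t ^ 2)) 0 w.

Definition Qf (x : R * R) : R := 3 * (fst x) ^ 2 - (snd x) ^ 2.
Definition Bf (x y : R * R) : R :=
  Qf (fst x + fst y, snd x + snd y) - Qf x - Qf y.
Definition c1 : R * R := (1, 3).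
Definition c2 : R * R := (-1, 3).
Definition avec : R * R := (1/3, 0).
Definition bvec : R * R := (1/12, -1/4).

Definition sum_upto (f : nat -> C) (N : nat) : C := sum_n f N.
Definition has_sum_nat (f : nat -> C) (s : C) : Prop :=
  filterlim (sum_upto f) eventually (locally s).

(* sum over Z^2 as the limit of the square partial sums over
   [-N,N]^2 (all series below are absolutely convergent) *)
Definition zshift (N k : nat) : Z := (Z.of_nat k - Z.of_nat N)%Z.
Definition sq_sum (f : Z -> Z -> C) (N : nat) : C :=
  sum_n (fun i => sum_n (fun j => f (zshift N i) (zshift N j)) (2 * N)) (2 * N).
Definition has_sum_Z2 (f : Z -> Z -> C) (s : C) : Prop :=
  filterlim (sq_sum f) eventually (locally s).

Definition H_term (tau : C) (n : nat) : C :=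
  let nr := INR n in
  Cmult (RtoC ((-1) ^ n))
   (Cmult (qpow tau (3 * nr ^ 2 + 2 * nr))
    (Cmult (Cplus 1 (qpow tau (2 * nr + 1)))
      (sum_n (fun k => let j := IZR (zshift n k) in
                Cmult (RtoC ((-1) ^ k * (-1) ^ n)) (qpow tau (- j ^ 2))) (2 * n)))).
(* note: (-1)^j = (-1)^(k-n) = (-1)^k (-1)^n *)

Definition Hminus_term (tau : C) (eps : R) (n r : Z) : C :=
  let m := 2 * IZR r + eps + 1/3 in
  Cmult (RtoC (sgn m * inc_gamma (1/2) (6 * PI * m ^ 2 * Im tau)))
        (qpow tau (- 3/2 * m ^ 2 + 1/2 * (2 * IZR n + eps + 1) ^ 2)).

Definition theta_term (tau : C) (m1 m2 : Z) : C :=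
  let nv := (IZR m1 + fst avec, IZR m2 + snd avec) in
  let v := Im tau in
  Cmult (RtoC (Efun (Bf c1 nv * sqrt v / sqrt (- Qf c1))
               - Efun (Bf c2 nv * sqrt v / sqrt (- Qf c2))))
   (Cmult (cexp (Cmult Ci (RtoC (2 * PI * Bf bvec nv)))) (qpow tau (Qf nv))).

(* Main.v *)
Require Import Defs.
From Stdlib Require Import Reals ZArith Lia Lra Psatz List Permutation.
From Coquelicot Require Import Coquelicot.
Open Scope R_scope.

Lemma exd_cont (f:R->R) x : ex_derive f x -> continuous f x.
Proof. apply (@ex_derive_continuous R_AbsRing R_NormedModule). Qed.

Lemma exRI_cont (f:R->R) a b : (forall z, Rmin a b <= z <= Rmax a b -> continuous f z) -> ex_RInt f a b.
Proof. apply (@ex_RInt_continuous R_CompleteNormedModule). Qed.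

Lemma scalR (a b : R) : scal a b = a * b.
Proof. reflexivity. Qed.

Ltac Req := match goal with |- ?a = ?b => change (@eq R a b) end.

Lemma exp_le_mono a b : a <= b -> exp a <= exp b.
Proof. intros H. destruct (Rle_lt_or_eq_dec a b H). apply Rlt_le, exp_increasing; auto. subst; lra. Qed.
Lemma inv_le1 y : 1 <= y -> / y <= 1.
Proof. intros. rewrite <- Rinv_1. apply Rinv_le_contravar; lra. Qed.

Definition gI (x:R) := RInt (fun t => exp (-(t^2))) 0 x.
Definition gF (x t : R) := exp (-(x^2) * (1 + t^2)) / (1 + t^2).
Definition gG x := RInt (fun t => gF x t) 0 1.

Lemma cont_gauss z : continuous (fun t => exp (-(t^2))) z.
Proof. apply exd_cont. auto_derive. auto. Qed.

Lemma exRI_gauss a b : ex_RInt (fun t => exp (-(t^2))) a b.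
Proof. apply exRI_cont. intros; apply cont_gauss. Qed.

Lemma opp1p t : 1 + t^2 <> 0.
Proof. nra. Qed.

Lemma cont_gF x z : continuous (fun t => gF x t) z.
Proof. apply exd_cont. unfold gF. auto_derive. pose proof (opp1p z). simpl in *. nra. Qed.

Lemma gI_deriv x : is_derive gI x (exp (-(x^2))).
Proof.
  apply (is_derive_RInt (fun t => exp (-(t^2))) gI 0 x).
  - apply filter_forall. intro b. apply (@RInt_correct R_CompleteNormedModule), exRI_gauss.
  - apply cont_gauss.
Qed.

Lemma Derive_gF x t : Derive (fun z => gF z t) x = -2*x*exp(-(x^2)*(1+t^2)).
Proof.
  apply is_derive_unique. unfold gF. auto_derive. pose proof (opp1p t); simpl in *; nra.
  replace (- (x * (x * 1)) * (1 + t * (t * 1))) with (- x ^ 2 * (1 + t ^ 2)) by ring. field. pose proof (opp1p t); simpl in *; nra.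
Qed.

Lemma gG_deriv x : is_derive gG x (RInt (fun t => -2*x*exp(-(x^2)*(1+t^2))) 0 1).
Proof.
  unfold gG.
  replace (RInt (fun t => -2*x*exp(-(x^2)*(1+t^2))) 0 1)
    with (RInt (fun t => Derive (fun u => gF u t) x) 0 1).
  2:{ apply RInt_ext. intros; apply Derive_gF. }
  apply is_derive_RInt_param.
  - apply filter_forall. intros y t _. unfold gF. auto_derive. pose proof (opp1p t); simpl in *; nra.
  - intros t _. apply continuity_2d_pt_ext with (f := fun u v => -2*u*exp(-(u^2)*(1+v^2))).
    { intros; symmetry; apply Derive_gF. }
    apply continuity_2d_pt_mult.
    + apply continuity_2d_pt_mult. apply continuity_2d_pt_const. apply continuity_2d_pt_id1.
    + apply continuity_1d_2d_pt_comp with (f := exp) (g := fun u v => -(u^2)*(1+v^2)).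
      * apply derivable_continuous_pt. apply derivable_pt_exp.
      * apply continuity_2d_pt_mult.
        -- apply continuity_2d_pt_opp. simpl. apply continuity_2d_pt_mult. apply continuity_2d_pt_id1.
           apply continuity_2d_pt_mult. apply continuity_2d_pt_id1. apply continuity_2d_pt_const.
        -- apply continuity_2d_pt_plus. apply continuity_2d_pt_const. simpl.
           apply continuity_2d_pt_mult. apply continuity_2d_pt_id2.
           apply continuity_2d_pt_mult. apply continuity_2d_pt_id2. apply continuity_2d_pt_const.
  - apply filter_forall. intros y. apply exRI_cont. intros; apply cont_gF.
Qed.

Lemma RInt_scalR (f : R -> R) a b l : ex_RInt f a b -> RInt (fun x => l * f x) a b = l * RInt f a b.
Proof. intros; apply (@RInt_scal R_CompleteNormedModule); auto. Qed.
Lemma RInt_comp_linR (f : R -> R) u v a b : ex_RInt f (u*a+v) (u*b+v) -> RInt (fun y => u * f (u*y+v)) a b = RInt f (u*a+v) (u*b+v).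
Proof. intros; apply (@RInt_comp_lin R_CompleteNormedModule); auto. Qed.

Lemma key_int x : RInt (fun t => -2*x*exp(-(x^2)*(1+t^2))) 0 1 = -2*exp(-(x^2))*gI x.
Proof.
  rewrite (RInt_ext _ (fun t => (-2*exp(-(x^2))) * (x * exp (-((x*t+0)^2))))).
  2:{ intros t _.
      assert (E: exp(-(x^2)*(1+t^2)) = exp(-(x^2)) * exp(-((x*t+0)^2))).
      { rewrite <- exp_plus. f_equal. ring. }
      rewrite E. Req. ring. }
  rewrite RInt_scalR.
  2:{ apply exRI_cont. intros. apply (exd_cont (fun t => x * (exp (-((x*t+0)^2))))). auto_derive. auto. }
  rewrite (RInt_comp_linR (fun s => exp (-(s^2))) x 0 0 1).
  2:{ apply exRI_gauss. }
  unfold gI. f_equal; f_equal; ring.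
Qed.

Definition gh x := gI x ^ 2 + gG x.

Lemma gh_deriv x : is_derive gh x 0.
Proof.
  pose proof (is_derive_pow gI 2 x _ (gI_deriv x)) as H1.
  pose proof (@is_derive_plus R_AbsRing R_NormedModule _ _ x _ _ H1 (gG_deriv x)) as H2.
  rewrite key_int in H2.
  replace 0 with (plus (INR 2 * exp (- x ^ 2) * gI x ^ Init.Nat.pred 2) (-2 * exp (- x ^ 2) * gI x)).
  apply H2. unfold plus; simpl. ring.
Qed.

Lemma gh_const x : gh x = gh 0.
Proof.
  pose proof (is_RInt_derive gh (fun _ => 0) 0 x (fun y _ => gh_deriv y) (fun y _ => continuous_const 0 y)) as H.
  pose proof (is_RInt_const 0 x (0:R)) as H2.
  pose proof (is_RInt_unique _ _ _ _ H) as H3. rewrite (is_RInt_unique _ _ _ _ H2) in H3. revert H3.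
  unfold scal, minus, plus, opp; simpl; unfold mult; simpl. intros. lra.
Qed.

Lemma gh0 : gh 0 = PI/4.
Proof.
  unfold gh, gI, gG.
  rewrite RInt_point. simpl.
  rewrite (RInt_ext _ (fun t => / (1 + t²))).
  2:{ intros. unfold gF. Req. replace (- 0 ^ 2 * (1 + x ^ 2)) with 0 by ring. rewrite exp_0. unfold Rsqr. simpl. field. pose proof (opp1p x). simpl in *. nra. }
  pose proof (is_RInt_derive atan (fun t => / (1 + t²)) 0 1 (fun y _ => is_derive_atan y)) as H.
  assert (Hc : forall x : R, Rmin 0 1 <= x <= Rmax 0 1 -> continuous (fun t : R => / (1 + t²)) x).
  { intros. apply exd_cont. auto_derive. unfold Rsqr; nra. }
  rewrite (@is_RInt_unique R_CompleteNormedModule _ _ _ _ (H Hc)).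
  unfold minus, plus, opp; simpl. rewrite atan_1, atan_0. unfold zero; simpl. ring.
Qed.

Lemma gG_bounds x : 0 <= gG x <= exp (-(x^2)).
Proof.
  assert (ex : ex_RInt (fun t => gF x t) 0 1) by (apply exRI_cont; intros; apply cont_gF).
  split.
  - apply RInt_ge_0; auto. lra. intros t _. unfold gF. apply Rle_mult_inv_pos. apply Rlt_le, exp_pos. nra.
  - unfold gG. replace (exp (-(x^2))) with (RInt (fun _ => exp (-(x^2))) 0 1).
    2:{ rewrite RInt_const. rewrite scalR. Req. ring. }
    apply RInt_le; auto. lra. apply ex_RInt_const.
    intros t Ht. unfold gF.
    assert (exp (-(x^2)*(1+t^2)) <= exp (-(x^2))).
    { apply exp_le_mono. nra. }
    assert (0 < exp (-(x^2)*(1+t^2))) by apply exp_pos.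
    assert (/ (1 + t^2) <= 1). { apply inv_le1. nra. }  
    unfold Rdiv. nra.
Qed.

Lemma lim_expm2 : is_lim (fun x => exp(-(x^2))) p_infty 0.
Proof.
  apply (is_lim_comp exp (fun x => -(x^2)) p_infty 0 m_infty).
  - apply is_lim_exp_m.
  - assert (H : is_lim (fun x => x * x) p_infty p_infty).
    { apply (is_lim_mult (fun x => x) (fun x => x) p_infty p_infty p_infty); try apply is_lim_id. simpl. auto. }
    apply (is_lim_ext (fun x => - (x * x))). intros; ring.
    apply (is_lim_opp _ p_infty p_infty) in H. exact H.
  - simpl. exists 0. intros; discriminate.
Qed.

Lemma gG_lim : is_lim gG p_infty 0.
Proof.
  apply (is_lim_le_le_loc (fun _ => 0) (fun x => exp(-(x^2)))).
  - exists 0. intros. apply gG_bounds.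
  - apply is_lim_const.
  - apply lim_expm2.
Qed.

Lemma gI_ge0 x : 0 <= x -> 0 <= gI x.
Proof. intros. apply RInt_ge_0; auto. apply exRI_gauss. intros; apply Rlt_le, exp_pos. Qed.

Lemma gI_lim : is_lim gI p_infty (sqrt PI / 2).
Proof.
  apply (is_lim_ext_loc (fun x => sqrt (PI/4 - gG x))).
  - exists 0. intros x Hx. rewrite <- gh0, <- (gh_const x). unfold gh.
    replace (gI x ^ 2 + gG x - gG x) with (gI x ^ 2) by ring.
    apply sqrt_pow2, gI_ge0. lra.
  - replace (sqrt PI / 2) with (sqrt (PI/4 - 0)).
    apply (is_lim_comp_continuous (fun x => PI/4 - gG x) sqrt p_infty (PI/4 - 0)).
    + apply (is_lim_minus (fun _ => PI/4) gG p_infty (PI/4) 0). apply is_lim_const. apply gG_lim. simpl. reflexivity.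
    + apply continuous_sqrt.
    + replace (PI/4 - 0) with (PI/4) by ring. rewrite sqrt_div_alt. 2: lra.
      replace 4 with (2*2) by ring. rewrite sqrt_square; lra.
Qed.

Definition gP (b:R) := RInt (fun t => exp (- PI * t ^ 2)) 0 b.

Lemma sqrtPI_pos : 0 < sqrt PI.
Proof. apply sqrt_lt_R0, PI_RGT_0. Qed.

Lemma cont_gaussP z : continuous (fun t => exp (- PI * t ^ 2)) z.
Proof. apply exd_cont. auto_derive. auto. Qed.

Lemma exRI_gaussP a b : ex_RInt (fun t => exp (- PI * t ^ 2)) a b.
Proof. apply exRI_cont. intros; apply cont_gaussP. Qed.

Lemma gP_eq b : gP b = / sqrt PI * gI (sqrt PI * b).
Proof.
  pose proof sqrtPI_pos as Hs.
  unfold gP, gI.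
  rewrite (RInt_ext _ (fun t => / sqrt PI * (sqrt PI * exp (- ((sqrt PI * t + 0) ^ 2))))).
  2:{ intros t _. Req. field_simplify. 2: lra. f_equal.
      replace ((sqrt PI * t + 0) ^ 2) with ((sqrt PI * sqrt PI) * t^2) by ring.
      rewrite sqrt_sqrt. ring. pose proof PI_RGT_0; lra. }
  rewrite RInt_scalR.
  2:{ apply exRI_cont. intros. apply (exd_cont (fun t => sqrt PI * (exp (-((sqrt PI*t+0)^2))))). auto_derive. auto. }
  rewrite (RInt_comp_linR (fun s => exp (-(s^2))) (sqrt PI) 0 0 b).
  2:{ apply exRI_gauss. }
  f_equal. f_equal; ring.
Qed.

Lemma lim_lin_p a : 0 < a -> is_lim (fun b => a*b) p_infty p_infty.
Proof.
  intros Ha P [M HM]. exists (M/a). intros x Hx. apply HM.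
  apply (Rmult_lt_compat_l a) in Hx; auto. field_simplify in Hx; lra.
Qed.

Lemma gP_lim : is_lim gP p_infty (1/2).
Proof.
  pose proof sqrtPI_pos as Hs.
  apply (is_lim_ext (fun b => / sqrt PI * gI (sqrt PI * b))).
  { intros; symmetry; apply gP_eq. }
  replace (1/2) with (/ sqrt PI * (sqrt PI / 2)) by (field; lra).
  apply (is_lim_scal_l (fun b => gI (sqrt PI * b)) (/ sqrt PI) p_infty (sqrt PI / 2)).
  apply (is_lim_comp gI (fun b => sqrt PI * b) p_infty (sqrt PI / 2) p_infty).
  - apply gI_lim.
  - apply lim_lin_p; auto.
  - exists 0. intros; discriminate.
Qed.

Lemma RInt_ChaslesR (f : R -> R) a b c : ex_RInt f a b -> ex_RInt f b c -> RInt f a b + RInt f b c = RInt f a c.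
Proof. intros; apply (@RInt_Chasles R_CompleteNormedModule); auto. Qed.

Lemma RInt_compR (f g dg : R -> R) a b :
  (forall x, Rmin a b <= x <= Rmax a b -> continuous f (g x)) ->
  (forall x, Rmin a b <= x <= Rmax a b -> is_derive g x (dg x) /\ continuous dg x) ->
  RInt (fun y => dg y * f (g y)) a b = RInt f (g a) (g b).
Proof. intros; apply (@RInt_comp R_CompleteNormedModule); auto. Qed.

Lemma gP_odd a : gP (-a) = - gP a.
Proof.
  unfold gP.
  pose proof (RInt_comp_linR (fun t => exp (- PI * t ^ 2)) (-1) 0 0 a (exRI_gaussP _ _)) as H.
  replace (-1 * 0 + 0) with 0 in H by ring. replace (-1 * a + 0) with (-a) in H by ring.
  rewrite <- H.
  rewrite (RInt_ext _ (fun y => -1 * exp (- PI * y ^ 2))).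
  2:{ intros. Req. f_equal. f_equal. ring. }
  rewrite RInt_scalR. Req. ring. apply exRI_gaussP.
Qed.

Lemma gP_diff a b : gP b - gP a = RInt (fun t => exp (- PI * t ^ 2)) a b.
Proof.
  unfold gP. rewrite <- (RInt_ChaslesR _ 0 a b); try apply exRI_gaussP. ring.
Qed.

Lemma gP_mono a b : a <= b -> gP a <= gP b.
Proof.
  intros. assert (0 <= gP b - gP a); [|lra]. rewrite gP_diff.
  apply RInt_ge_0; auto. apply exRI_gaussP. intros; apply Rlt_le, exp_pos.
Qed.

Lemma gP_le_half c : gP c <= 1/2.
Proof.
  assert (H := is_lim_le_loc (fun _ => gP c) gP p_infty (gP c) (1/2)).
  simpl in H. apply H.
  - exists c. intros. apply gP_mono. lra.
  - apply is_lim_const.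
  - apply gP_lim.
Qed.

Lemma gP_tail a : 0 <= a -> 1/2 - gP a <= exp (- PI * a ^ 2) / 2.
Proof.
  intros Ha.
  assert (Hb : forall b, a <= b -> gP b - gP a <= exp (- PI * a ^ 2) / 2).
  { intros b Hab. rewrite gP_diff.
    apply Rle_trans with (RInt (fun s => exp (- PI * a ^ 2) * (1 * exp (- PI * (1 * s + - a) ^ 2))) a b).
    - apply RInt_le; auto. apply exRI_gaussP.
      apply exRI_cont; intros. apply (exd_cont (fun s => exp (- PI * a ^ 2) * (1 * exp (- PI * (1 * s + - a) ^ 2)))). auto_derive. auto.
      intros s Hs. rewrite Rmult_1_l. rewrite <- exp_plus. apply exp_le_mono.
      pose proof PI_RGT_0. assert (0 <= PI * (a * (s - a))) by (apply Rmult_le_pos; nra). nra.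
    - rewrite RInt_scalR. rewrite (RInt_comp_linR (fun t => exp (- PI * t ^ 2)) 1 (-a) a b).
      + replace (1 * a + - a) with 0 by ring. fold (gP (1 * b + - a)).
        pose proof (gP_le_half (1 * b + - a)). pose proof (exp_pos (- PI * a ^ 2)). nra.
      + apply exRI_gaussP.
      + apply exRI_cont; intros. apply (exd_cont (fun s => (1 * exp (- PI * (1 * s + - a) ^ 2)))). auto_derive. auto. }
  assert (H := is_lim_le_loc (fun b => gP b - gP a) (fun _ => exp (- PI * a ^ 2) / 2) p_infty (1/2 - gP a) (exp (- PI * a ^ 2) / 2)).
  simpl in H. apply H.
  - exists a. intros. apply Hb. lra.
  - apply (is_lim_minus gP (fun _ => gP a) p_infty (1/2) (gP a)). apply gP_lim. apply is_lim_const. reflexivity.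
  - apply is_lim_const.
Qed.

Lemma Rpower_half_m t : 0 < t -> Rpower t (1/2 - 1) = / sqrt t.
Proof.
  intros. replace (1/2 - 1) with (- (/2)) by field. rewrite Rpower_Ropp, Rpower_sqrt; auto.
Qed.

Lemma cont_gam t : 0 < t -> continuous (fun t => exp (- t) * Rpower t (1/2 - 1)) t.
Proof. intros. apply exd_cont. unfold Rpower. auto_derive. auto. Qed.

Lemma incg_RInt y b : 0 < y -> y <= b ->
  RInt (fun t => exp (- t) * Rpower t (1/2 - 1)) y b = 2 * sqrt PI * (gP (sqrt (b/PI)) - gP (sqrt (y/PI))).
Proof.
  intros Hy Hb. pose proof PI_RGT_0 as Hpi. pose proof sqrtPI_pos as Hs.
  set (s0 := sqrt (y/PI)). set (s1 := sqrt (b/PI)).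
  assert (Hs0 : 0 < s0). { apply sqrt_lt_R0. apply Rdiv_lt_0_compat; lra. }
  assert (Hs01 : s0 <= s1). { apply sqrt_le_1_alt. unfold Rdiv. apply Rmult_le_compat_r. left; apply Rinv_0_lt_compat; lra. lra. }
  assert (Eg : forall z, 0 <= z -> PI * (sqrt (z/PI)) ^ 2 = z).
  { intros z Hz. simpl. rewrite Rmult_1_r. rewrite sqrt_sqrt. field. lra. apply Rdiv_le_0_compat; lra. }
  rewrite <- (Eg y) at 1 by lra. rewrite <- (Eg b) at 1 by lra. fold s0 s1.
  rewrite <- (RInt_compR (fun t => exp (- t) * Rpower t (1/2 - 1)) (fun s => PI * s ^ 2) (fun s => 2 * PI * s)).
  - rewrite (RInt_ext _ (fun s => 2 * sqrt PI * exp (- PI * s ^ 2))).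
    + rewrite RInt_scalR. rewrite gP_diff. reflexivity. apply exRI_gaussP.
    + intros s Hs'. rewrite Rmin_left in Hs' by lra. rewrite Rmax_right in Hs' by lra.
      rewrite Rpower_half_m. 2:{ apply Rmult_lt_0_compat; [lra| apply pow_lt; lra]. }
      rewrite sqrt_mult_alt by lra. replace (s ^ 2) with (s * s) by ring. rewrite sqrt_square by lra.
      replace (- (PI * (s * s))) with (- PI * (s * s)) by ring.
      Req. field_simplify. 2: split; lra.
      replace (PI) with (sqrt PI * sqrt PI) at 1 by (apply sqrt_sqrt; lra). field. lra.
  - intros x Hx. rewrite Rmin_left in Hx by lra. rewrite Rmax_right in Hx by lra.
    apply cont_gam. apply Rmult_lt_0_compat; [lra| apply pow_lt; lra].
  - intros x Hx. split. auto_derive. auto. ring.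
    apply exd_cont. auto_derive. auto.
Qed.

Lemma incg_eq y : 0 < y -> inc_gamma (1/2) y = 2 * sqrt PI * (1/2 - gP (sqrt (y/PI))).
Proof.
  intros Hy. pose proof PI_RGT_0 as Hpi.
  unfold inc_gamma.
  assert (L : is_lim (fun b => RInt (fun t => exp (- t) * Rpower t (1/2 - 1)) y b) p_infty
                (2 * sqrt PI * (1/2 - gP (sqrt (y/PI))))).
  { apply (is_lim_ext_loc (fun b => 2 * sqrt PI * (gP (sqrt (b/PI)) - gP (sqrt (y/PI))))).
    - exists y. intros b Hb. symmetry. apply incg_RInt; lra.
    - apply (is_lim_scal_l (fun b => gP (sqrt (b/PI)) - gP (sqrt (y/PI))) (2 * sqrt PI) p_infty (1/2 - gP (sqrt (y/PI)))).
      apply (is_lim_minus _ (fun _ => gP (sqrt (y/PI))) p_infty (1/2) (gP (sqrt (y/PI)))).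
      2: apply is_lim_const. 2: reflexivity.
      apply (is_lim_comp gP (fun b => sqrt (b/PI)) p_infty (1/2) p_infty).
      + apply gP_lim.
      + apply is_lim_sqrt_p. apply (is_lim_ext (fun b => / PI * b)). intros; unfold Rdiv; ring.
        apply lim_lin_p. apply Rinv_0_lt_compat; lra.
      + exists 0. intros; discriminate. }
  rewrite (is_lim_unique _ _ _ L). reflexivity.
Qed.

Lemma sgn_pos x : 0 < x -> sgn x = 1.
Proof. intros. unfold sgn. destruct (Rlt_dec 0 x); [reflexivity|lra]. Qed.
Lemma sgn_neg x : x < 0 -> sgn x = -1.
Proof. intros. unfold sgn. destruct (Rlt_dec 0 x); [lra|]. destruct (Rlt_dec x 0); [reflexivity|lra]. Qed.

Lemma incg_pix x : x <> 0 -> inc_gamma (1/2) (PI * x ^ 2) = 2 * sqrt PI * (1/2 - gP (Rabs x)).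
Proof.
  intros Hx. pose proof PI_RGT_0 as Hpi.
  rewrite incg_eq. 2:{ apply Rmult_lt_0_compat. lra. apply pow2_gt_0; auto. }
  f_equal. f_equal. f_equal.
  replace (PI * x ^ 2 / PI) with (x²) by (unfold Rsqr; field; lra).
  apply sqrt_Rsqr_abs.
Qed.

Lemma Efun_core x : x <> 0 -> Efun x = sgn x * (1 - inc_gamma (1/2) (PI * x ^ 2) / sqrt PI).
Proof.
  intros Hx. pose proof sqrtPI_pos as Hs. rewrite incg_pix; auto.
  unfold Efun. fold (gP x).
  destruct (Rlt_dec 0 x).
  - rewrite sgn_pos, Rabs_right by lra. field. lra.
  - rewrite sgn_neg, Rabs_left by lra. rewrite gP_odd. field. lra.
Qed.

Lemma incg_bound x : x <> 0 -> 0 <= inc_gamma (1/2) (PI * x ^ 2) <= sqrt PI * exp (- PI * x ^ 2).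
Proof.
  intros Hx. pose proof sqrtPI_pos as Hs. rewrite incg_pix; auto.
  pose proof (gP_le_half (Rabs x)). pose proof (gP_tail (Rabs x) (Rabs_pos x)).
  replace (Rabs x ^ 2) with (x ^ 2) in H0.
  2:{ rewrite <- Rsqr_pow2, <- Rsqr_pow2. symmetry; rewrite <- Rsqr_abs; reflexivity. }
  split; nra.
Qed.

Definition P2 := (Z*Z)%type.
Definition zz_dec : forall x y : P2, {x=y}+{x<>y}.
Proof. decide equality; apply Z.eq_dec. Defined.
Definition inb (x : P2) (L : list P2) : bool := if In_dec zz_dec x L then true else false.
Lemma inb_true x L : inb x L = true <-> In x L.
Proof. unfold inb. destruct (In_dec zz_dec x L); split; intros; auto; discriminate. Qed.
Lemma inb_false x L : inb x L = false <-> ~ In x L.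
Proof. unfold inb. destruct (In_dec zz_dec x L); split; intros; auto; try discriminate; contradiction. Qed.

Fixpoint sumL {A} (f : A -> C) (l : list A) : C :=
  match l with nil => RtoC 0 | cons x l' => Cplus (f x) (sumL f l') end.
Fixpoint sumLR {A} (g : A -> R) (l : list A) : R :=
  match l with nil => 0 | cons x l' => g x + sumLR g l' end.

Section SL.
Context {A : Type}.
Implicit Types (f g : A -> C) (l : list A).

Lemma sumL_app f l1 l2 : sumL f (l1 ++ l2) = Cplus (sumL f l1) (sumL f l2).
Proof. induction l1; simpl. ring. rewrite IHl1. ring. Qed.
Lemma sumLR_app (g : A -> R) l1 l2 : sumLR g (l1 ++ l2) = sumLR g l1 + sumLR g l2.
Proof. induction l1; simpl. ring. rewrite IHl1. ring. Qed.
Lemma sumL_perm f l l' : Permutation l l' -> sumL f l = sumL f l'.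
Proof. intros H; induction H; simpl; try ring; congruence. Qed.
Lemma sumLR_perm (g : A -> R) l l' : Permutation l l' -> sumLR g l = sumLR g l'.
Proof. intros H; induction H; simpl; try ring; congruence. Qed.
Lemma sumL_ext_in f g l : (forall x, In x l -> f x = g x) -> sumL f l = sumL g l.
Proof. induction l; simpl; intros H; auto. rewrite H, IHl; auto. Qed.
Lemma sumLR_ext_in (f g : A -> R) l : (forall x, In x l -> f x = g x) -> sumLR f l = sumLR g l.
Proof. induction l; simpl; intros H; auto. rewrite H, IHl; auto. Qed.
Lemma sumL_map {B} f (h : B -> A) (l : list B) : sumL f (map h l) = sumL (fun x => f (h x)) l.
Proof. induction l; simpl; auto. rewrite IHl; auto. Qed.
Lemma sumLR_map {B} (f : A -> R) (h : B -> A) (l : list B) : sumLR f (map h l) = sumLR (fun x => f (h x)) l.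
Proof. induction l; simpl; auto. rewrite IHl; auto. Qed.
Lemma sumL_plus f g l : sumL (fun x => Cplus (f x) (g x)) l = Cplus (sumL f l) (sumL g l).
Proof. induction l; simpl. ring. rewrite IHl. ring. Qed.
Lemma sumL_scal (c : C) f l : sumL (fun x => Cmult c (f x)) l = Cmult c (sumL f l).
Proof. induction l; simpl. ring. rewrite IHl. ring. Qed.
Lemma sumLR_scal (c : R) (f : A -> R) l : sumLR (fun x => c * f x) l = c * sumLR f l.
Proof. induction l; simpl. ring. rewrite IHl. ring. Qed.
Lemma sumL_zero f l : (forall x, In x l -> f x = RtoC 0) -> sumL f l = RtoC 0.
Proof. induction l; simpl; intros H; auto. rewrite H, IHl; auto. ring. Qed.
Lemma Cmod_sumL f l : Cmod (sumL f l) <= sumLR (fun x => Cmod (f x)) l.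
Proof. induction l; simpl. rewrite Cmod_0; lra. eapply Rle_trans. apply Cmod_triangle. lra. Qed.
Lemma sumLR_nonneg (g : A -> R) l : (forall x, 0 <= g x) -> 0 <= sumLR g l.
Proof. intros H; induction l; simpl. lra. pose proof (H a); lra. Qed.
Lemma sumLR_le (g h : A -> R) l : (forall x, In x l -> g x <= h x) -> sumLR g l <= sumLR h l.
Proof. induction l; simpl; intros H. lra. pose proof (H a (or_introl eq_refl)). pose proof (IHl (fun x Hx => H x (or_intror Hx))). lra. Qed.
Lemma sumL_filter f (p : A -> bool) l : sumL f l = Cplus (sumL f (filter p l)) (sumL f (filter (fun x => negb (p x)) l)).
Proof. induction l; simpl. ring. destruct (p a); simpl; rewrite IHl; ring. Qed.
Lemma sumLR_filter (f : A -> R) (p : A -> bool) l : sumLR f l = sumLR f (filter p l) + sumLR f (filter (fun x => negb (p x)) l).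
Proof. induction l; simpl. ring. destruct (p a); simpl; rewrite IHl; ring. Qed.
Lemma sumL_filter_zero f (p : A -> bool) l : (forall x, p x = false -> f x = RtoC 0) -> sumL f l = sumL f (filter p l).
Proof. intros H. rewrite (sumL_filter f p l). rewrite (sumL_zero f (filter (fun x => negb (p x)) l)). ring.
  intros x Hx. apply filter_In in Hx. destruct Hx. apply H. destruct (p x); auto. Qed.
End SL.

Lemma sumLR_incl (g : P2 -> R) l l' : NoDup l -> incl l l' -> (forall x, 0 <= g x) -> sumLR g l <= sumLR g l'.
Proof.
  revert l'. induction l as [|a l IH]; intros l' Hnd Hinc Hg; simpl.
  - apply sumLR_nonneg; auto.
  - inversion Hnd; subst.
    assert (Ha : In a l') by (apply Hinc; left; auto).
    destruct (in_split _ _ Ha) as [l2 [l3 E]]. subst l'.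
    rewrite (sumLR_perm g (l2 ++ a :: l3) (a :: l2 ++ l3)).
    2:{ symmetry. apply Permutation_middle. }
    simpl. apply Rplus_le_compat_l. apply IH; auto.
    intros x Hx. assert (In x (l2 ++ a :: l3)) by (apply Hinc; right; auto).
    apply in_app_or in H. apply in_or_app. destruct H as [H|[H|H]]; auto. subst; contradiction.
Qed.

Lemma sumL_split_sub (f : P2 -> C) L L' : NoDup L -> NoDup L' -> incl L L' ->
  sumL f L' = Cplus (sumL f L) (sumL f (filter (fun x => negb (inb x L)) L')).
Proof.
  intros HL HL' Hi. rewrite (sumL_filter f (fun x => inb x L) L'). f_equal.
  apply sumL_perm. apply NoDup_Permutation. apply NoDup_filter; auto. auto.
  intros x. rewrite filter_In, inb_true. split; intros; try tauto. split; auto.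
Qed.

Lemma sumLR_split_sub (f : P2 -> R) L L' : NoDup L -> NoDup L' -> incl L L' ->
  sumLR f L' = sumLR f L + sumLR f (filter (fun x => negb (inb x L)) L').
Proof.
  intros HL HL' Hi. rewrite (sumLR_filter f (fun x => inb x L) L'). f_equal.
  apply sumLR_perm. apply NoDup_Permutation. apply NoDup_filter; auto. auto.
  intros x. rewrite filter_In, inb_true. split; intros; try tauto. split; auto.
Qed.

Lemma NoDup_map_inj {A B} (f : A -> B) l : (forall x y, f x = f y -> x = y) -> NoDup l -> NoDup (map f l).
Proof.
  intros Hf H. induction H; simpl; constructor; auto.
  intros Hin. apply in_map_iff in Hin. destruct Hin as [y [E Hy]]. apply Hf in E. subst; contradiction.
Qed.

Lemma NoDup_prod {A B} (l1 : list A) (l2 : list B) : NoDup l1 -> NoDup l2 -> NoDup (list_prod l1 l2).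
Proof.
  intros H1 H2. induction H1; simpl. constructor.
  apply NoDup_app; auto.
  - apply NoDup_map_inj; auto. intros a b E; inversion E; auto.
  - intros p Hp Hp2. apply in_map_iff in Hp. destruct Hp as [y [E _]]. subst.
    apply in_prod_iff in Hp2. tauto.
Qed.

Definition zl (N:nat) : list Z := map (zshift N) (seq 0 (S (2*N))).
Definition sqL N : list P2 := list_prod (zl N) (zl N).

Lemma In_zl N a : In a (zl N) <-> (- Z.of_nat N <= a <= Z.of_nat N)%Z.
Proof.
  unfold zl, zshift. rewrite in_map_iff. split.
  - intros [k [E Hk]]. apply in_seq in Hk. lia.
  - intros H. exists (Z.to_nat (a + Z.of_nat N)). split. lia. apply in_seq. lia.
Qed.

Lemma NoDup_zl N : NoDup (zl N).
Proof. apply NoDup_map_inj. intros x y E. unfold zshift in E. lia. apply seq_NoDup. Qed.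

Lemma NoDup_sqL N : NoDup (sqL N).
Proof. apply NoDup_prod; apply NoDup_zl. Qed.

Lemma In_sqL N a b : In (a,b) (sqL N) <-> (- Z.of_nat N <= a <= Z.of_nat N /\ - Z.of_nat N <= b <= Z.of_nat N)%Z.
Proof. unfold sqL. rewrite in_prod_iff, !In_zl. tauto. Qed.

Lemma sqL_mono n m : (n <= m)%nat -> incl (sqL n) (sqL m).
Proof. intros H [a b] Hp. apply In_sqL in Hp. apply In_sqL. lia. Qed.

Definition bnd (L : list P2) : nat :=
  fold_right (fun p m => Nat.max (Z.abs_nat (fst p)) (Nat.max (Z.abs_nat (snd p)) m)) 0%nat L.

Lemma bnd_sq L N : (bnd L <= N)%nat -> incl L (sqL N).
Proof.
  induction L as [|p L IH]; simpl; intros H x Hx. destruct Hx.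
  destruct Hx as [Hx|Hx].
  - subst. destruct x as [a b]. apply In_sqL. simpl in H. lia.
  - apply IH; auto. lia.
Qed.

Lemma sum_n_sumL (g : nat -> C) m : sum_n g m = sumL g (seq 0 (S m)).
Proof.
  induction m.
  - rewrite sum_O. simpl. unfold plus; simpl. ring_simplify. reflexivity.
  - rewrite sum_Sn, IHm. rewrite (seq_S (S m) 0), sumL_app. simpl. unfold plus; simpl. ring.
Qed.

Lemma sumL_prod (F : P2 -> C) (l1 l2 : list Z) :
  sumL F (list_prod l1 l2) = sumL (fun a => sumL (fun b => F (a,b)) l2) l1.
Proof. induction l1; simpl; auto. rewrite sumL_app, sumL_map, IHl1. reflexivity. Qed.

Lemma sumLR_prod (F : P2 -> R) (l1 l2 : list Z) :
  sumLR F (list_prod l1 l2) = sumLR (fun a => sumLR (fun b => F (a,b)) l2) l1.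
Proof. induction l1; simpl; auto. rewrite sumLR_app, sumLR_map, IHl1. reflexivity. Qed.

Lemma sq_sum_eq (F : P2 -> C) N : sq_sum (fun a b => F (a,b)) N = sumL F (sqL N).
Proof.
  unfold sq_sum, sqL. rewrite sumL_prod. unfold zl. rewrite sumL_map.
  replace (2 * N)%nat with (2 * N)%nat by reflexivity.
  rewrite sum_n_sumL. apply sumL_ext_in. intros i _.
  rewrite sumL_map. rewrite sum_n_sumL. reflexivity.
Qed.

Definition has_usum (F : P2 -> C) (s : C) : Prop :=
  forall eps, 0 < eps -> exists L0 : list P2, forall L, NoDup L -> incl L0 L -> Cmod (Cminus (sumL F L) s) <= eps.

Lemma usum_sq F s : has_usum F s -> has_sum_Z2 (fun a b => F (a,b)) s.
Proof.
  intros H. unfold has_sum_Z2. apply (filterlim_locally (F := eventually)).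
  intros eps. destruct (H (eps/2)) as [L0 HL0]. destruct eps; simpl; lra.
  exists (bnd L0). intros N HN. apply (@norm_compat1 C_AbsRing C_NormedModule).
  rewrite sq_sum_eq. eapply Rle_lt_trans. apply HL0. apply NoDup_sqL. apply bnd_sq. lia.
  destruct eps; simpl; lra.
Qed.

Lemma nodup_incl2 (L0 L1 : list P2) : exists L, NoDup L /\ incl L0 L /\ incl L1 L.
Proof.
  exists (nodup zz_dec (L0 ++ L1)). split. apply NoDup_nodup.
  split; intros x Hx; apply nodup_In; apply in_or_app; auto.
Qed.

Lemma usum_unique F s t : has_usum F s -> has_usum F t -> s = t.
Proof.
  intros Hs Ht. replace s with (Cplus (Cminus s t) t) by ring.
  replace (Cminus s t) with (RtoC 0). ring. symmetry. apply Cmod_eq_0.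
  apply Rle_antisym; [|apply Cmod_ge_0].
  apply Rnot_lt_le. intros Hlt.
  set (e := Cmod (Cminus s t) / 3).
  assert (He : 0 < e) by (unfold e; lra).
  destruct (Hs e He) as [L0 H0]. destruct (Ht e He) as [L1 H1].
  destruct (nodup_incl2 L0 L1) as [L [HL [I0 I1]]].
  specialize (H0 L HL I0). specialize (H1 L HL I1).
  assert (Cmod (Cminus s t) <= Cmod (Cminus (sumL F L) t) + Cmod (Cminus (sumL F L) s)).
  { replace (Cminus s t) with (Cplus (Cminus (sumL F L) t) (Copp (Cminus (sumL F L) s))) by ring.
    eapply Rle_trans. apply Cmod_triangle. rewrite Cmod_opp. lra. }
  unfold e in *; lra.
Qed.

Lemma usum_ext F G s : (forall x, F x = G x) -> has_usum F s -> has_usum G s.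
Proof.
  intros E H eps He. destruct (H eps He) as [L0 H0]. exists L0. intros L HL I.
  rewrite <- (sumL_ext_in F G); auto.
Qed.

Lemma usum_plus F G s t : has_usum F s -> has_usum G t -> has_usum (fun x => Cplus (F x) (G x)) (Cplus s t).
Proof.
  intros Hs Ht eps He. destruct (Hs (eps/2)) as [L0 H0]. lra. destruct (Ht (eps/2)) as [L1 H1]. lra.
  exists (L0 ++ L1). intros L HL I.
  rewrite sumL_plus.
  replace (Cminus (Cplus (sumL F L) (sumL G L)) (Cplus s t)) with (Cplus (Cminus (sumL F L) s) (Cminus (sumL G L) t)) by ring.
  eapply Rle_trans. apply Cmod_triangle.
  assert (Cmod (Cminus (sumL F L) s) <= eps/2). { apply H0; auto. intros x Hx; apply I, in_or_app; auto. }
  assert (Cmod (Cminus (sumL G L) t) <= eps/2). { apply H1; auto. intros x Hx; apply I, in_or_app; auto. }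
  lra.
Qed.

Lemma usum_scal F s c : has_usum F s -> has_usum (fun x => Cmult c (F x)) (Cmult c s).
Proof.
  intros Hs eps He. destruct (Hs (eps / (1 + Cmod c))) as [L0 H0].
  { apply Rdiv_lt_0_compat; auto. pose proof (Cmod_ge_0 c); lra. }
  exists L0. intros L HL I. rewrite sumL_scal.
  replace (Cminus (Cmult c (sumL F L)) (Cmult c s)) with (Cmult c (Cminus (sumL F L) s)) by ring.
  rewrite Cmod_mult. specialize (H0 L HL I).
  pose proof (Cmod_ge_0 c). pose proof (Cmod_ge_0 (Cminus (sumL F L) s)).
  apply Rle_trans with ((1 + Cmod c) * (eps / (1 + Cmod c))).
  - apply Rle_trans with (Cmod c * (eps / (1 + Cmod c))).
    apply Rmult_le_compat_l; auto.
    apply Rmult_le_compat_r. apply Rlt_le, Rdiv_lt_0_compat; lra. lra.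
  - right. field. lra.
Qed.

Lemma usum_transfer (F : P2 -> C) (phi psi : P2 -> P2) (P : P2 -> bool) s :
  (forall u, psi (phi u) = u) -> (forall x, P x = true -> phi (psi x) = x) ->
  (forall u, P (phi u) = true) -> (forall x, P x = false -> F x = RtoC 0) ->
  has_usum (fun u => F (phi u)) s -> has_usum F s.
Proof.
  intros H1 H2 H3 H4 Hs eps He. destruct (Hs eps He) as [L0 H0].
  exists (map phi L0). intros L HL I.
  rewrite (sumL_filter_zero F P L H4).
  set (L1 := filter P L).
  assert (E : map phi (map psi L1) = L1).
  { rewrite map_map. rewrite <- (map_id L1) at 2. apply map_ext_in.
    intros x Hx. apply H2. unfold L1 in Hx. apply filter_In in Hx. tauto. }
  rewrite <- E. rewrite sumL_map.
  apply H0.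
  - apply (NoDup_map_inv phi). rewrite E. apply NoDup_filter; auto.
  - intros u Hu. apply in_map_iff. exists (phi u). split; auto.
    unfold L1. apply filter_In. split; auto. apply I. apply in_map; auto.
Qed.

Definition tail_small (F : P2 -> C) := forall eps, 0 < eps -> exists L0 : list P2,
  forall L, NoDup L -> (forall x, In x L -> ~ In x L0) -> sumLR (fun x => Cmod (F x)) L <= eps.

Lemma Cmod_le_abs (z : C) : Cmod z <= Rabs (fst z) + Rabs (snd z).
Proof.
  unfold Cmod. rewrite <- (sqrt_pow2 (Rabs (fst z) + Rabs (snd z))).
  2:{ pose proof (Rabs_pos (fst z)); pose proof (Rabs_pos (snd z)); lra. }
  apply sqrt_le_1_alt.
  pose proof (Rabs_pos (fst z)); pose proof (Rabs_pos (snd z)).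
  rewrite <- (pow2_abs (fst z)), <- (pow2_abs (snd z)). nra.
Qed.

Lemma diff_bound (F : P2 -> C) (L0 L L' : list P2) eps :
  (forall L, NoDup L -> (forall x, In x L -> ~ In x L0) -> sumLR (fun x => Cmod (F x)) L <= eps) ->
  NoDup L -> NoDup L' -> incl L L' -> incl L0 L -> Cmod (Cminus (sumL F L') (sumL F L)) <= eps.
Proof.
  intros H HL HL' I I0. rewrite (sumL_split_sub F L L'); auto.
  replace (Cminus (Cplus (sumL F L) (sumL F (filter (fun x => negb (inb x L)) L'))) (sumL F L))
    with (sumL F (filter (fun x => negb (inb x L)) L')) by ring.
  eapply Rle_trans. apply Cmod_sumL. apply H. apply NoDup_filter; auto.
  intros x Hx Hx0. apply filter_In in Hx. destruct Hx as [_ Hx].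
  apply Bool.negb_true_iff, inb_false in Hx. apply Hx, I0; auto.
Qed.

Lemma tail_usum F : tail_small F -> exists s, has_usum F s.
Proof.
  intros HT.
  set (a := fun N => sumL F (sqL N)).
  assert (Hc : forall eps, 0 < eps -> exists N0, forall n m, (N0 <= n)%nat -> (n <= m)%nat -> Cmod (Cminus (a m) (a n)) <= eps).
  { intros eps He. destruct (HT eps He) as [L0 H0]. exists (bnd L0). intros n m Hn Hm.
    apply (diff_bound F L0); auto using NoDup_sqL, sqL_mono, bnd_sq. }
  assert (Hcr : forall (pr : C -> R), (forall z, Rabs (pr z) <= Cmod z) -> (forall z w, pr (Cminus z w) = pr z - pr w) ->
           Cauchy_crit (fun N => pr (a N))).
  { intros pr Hpr Hlin eps He. destruct (Hc (eps/2)) as [N0 H0]. lra. exists N0. intros n m Hn Hm.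
    unfold R_dist. destruct (Nat.le_ge_cases n m).
    - rewrite Rabs_minus_sym. rewrite <- Hlin. eapply Rle_lt_trans. apply Hpr. eapply Rle_lt_trans. apply H0; lia. lra.
    - rewrite <- Hlin. eapply Rle_lt_trans. apply Hpr. eapply Rle_lt_trans. apply H0; lia. lra. }
  assert (H1 : forall z : C, Rabs (fst z) <= Cmod z).
  { intros z. eapply Rle_trans. 2: apply Rmax_Cmod. apply Rmax_l. }
  assert (H2 : forall z : C, Rabs (snd z) <= Cmod z).
  { intros z. eapply Rle_trans. 2: apply Rmax_Cmod. apply Rmax_r. }
  destruct (Rcomplete.R_complete _ (Hcr fst H1 (fun z w => eq_refl))) as [lr Hr].
  destruct (Rcomplete.R_complete _ (Hcr snd H2 (fun z w => eq_refl))) as [li Hi].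
  exists (lr, li). intros eps He.
  destruct (HT (eps/2)) as [L0 H0]. lra.
  exists L0. intros L HL I0.
  destruct (Hr (eps/4)) as [N1 HN1]. lra.
  destruct (Hi (eps/4)) as [N2 HN2]. lra.
  set (N := Nat.max (bnd L) (Nat.max N1 N2)).
  assert (D1 : Cmod (Cminus (a N) (sumL F L)) <= eps/2).
  { apply (diff_bound F L0); auto using NoDup_sqL. apply bnd_sq. unfold N; lia. }
  assert (D2 : Cmod (Cminus (a N) (lr, li)) <= eps/2).
  { eapply Rle_trans. apply Cmod_le_abs. replace (fst (Cminus (a N) (lr, li))) with (fst (a N) - lr) by reflexivity. replace (snd (Cminus (a N) (lr, li))) with (snd (a N) - li) by reflexivity.
    specialize (HN1 N ltac:(unfold N; lia)). specialize (HN2 N ltac:(unfold N; lia)).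
    unfold R_dist in *. lra. }
  replace (Cminus (sumL F L) (lr, li)) with (Cminus (Cminus (a N) (lr, li)) (Cminus (a N) (sumL F L))) by ring.
  eapply Rle_trans. apply Cmod_triangle. rewrite Cmod_opp. lra.
Qed.

Section Geo.
Variable r : R.
Hypothesis Hr : 0 <= r < 1.

Lemma geo_seq n d : sumLR (fun k => r ^ k) (seq n d) <= r ^ n / (1 - r).
Proof.
  revert n. induction d; intros n; simpl.
  - apply Rdiv_le_0_compat. apply pow_le; lra. lra.
  - specialize (IHd (S n)). simpl in IHd.
    apply Rle_trans with (r ^ n + r * r ^ n / (1 - r)). lra.
    right. field. lra.
Qed.

Definition hZ (a : Z) := r ^ Z.abs_nat a.
Lemma hZ_nonneg a : 0 <= hZ a.
Proof. unfold hZ. apply pow_le; lra. Qed.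

Definition rng (N M : nat) : list Z :=
  map Z.of_nat (seq (S N) (M - N)) ++ map (fun k => - Z.of_nat k)%Z (seq (S N) (M - N)).
Definition full M := (0%Z :: rng 0 M).

Lemma In_rng N M a : (N < Z.abs_nat a <= M)%nat -> In a (rng N M).
Proof.
  intros H. unfold rng. apply in_or_app.
  destruct (Z_le_gt_dec 0 a).
  - left. apply in_map_iff. exists (Z.abs_nat a). split. lia. apply in_seq. lia.
  - right. apply in_map_iff. exists (Z.abs_nat a). split. lia. apply in_seq. lia.
Qed.

Lemma In_full M a : (Z.abs_nat a <= M)%nat -> In a (full M).
Proof.
  intros H. destruct (Z.eq_dec a 0). subst; left; auto. right. apply In_rng. lia.
Qed.

Lemma sum_rng N M : sumLR hZ (rng N M) <= 2 * (r ^ S N / (1 - r)).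
Proof.
  unfold rng. rewrite sumLR_app, !sumLR_map.
  rewrite (sumLR_ext_in _ (fun k => r ^ k)). 2:{ intros; unfold hZ; f_equal; lia. }
  rewrite (sumLR_ext_in (fun x => hZ (- Z.of_nat x)) (fun k => r ^ k)). 2:{ intros; unfold hZ; f_equal; lia. }
  pose proof (geo_seq (S N) (M - N)). lra.
Qed.

Definition Sg := 1 + 2 * (r / (1 - r)).
Lemma sum_full M : sumLR hZ (full M) <= Sg.
Proof.
  unfold full, Sg. simpl. pose proof (sum_rng 0 M). simpl in H.
  unfold hZ at 1. simpl. rewrite Rmult_1_r in H. lra.
Qed.

Lemma sumLR_prod_mul K (l1 l2 : list Z) :
  sumLR (fun x : P2 => K * hZ (fst x) * hZ (snd x)) (list_prod l1 l2) = K * sumLR hZ l1 * sumLR hZ l2.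
Proof.
  rewrite sumLR_prod. simpl.
  rewrite (sumLR_ext_in _ (fun a => (K * hZ a) * sumLR hZ l2)).
  2:{ intros. rewrite <- sumLR_scal. apply sumLR_ext_in. intros; ring. }
  rewrite (sumLR_ext_in _ (fun a => (K * sumLR hZ l2) * hZ a)). 2:{ intros; ring. }
  rewrite sumLR_scal. ring.
Qed.

Lemma geom_tail (F : P2 -> C) K : 0 <= K ->
  (forall a b, Cmod (F (a,b)) <= K * hZ a * hZ b) -> tail_small F.
Proof.
  intros HK HF eps He.
  assert (HS : 0 <= Sg). { unfold Sg. assert (0 <= r / (1 - r)) by (apply Rdiv_le_0_compat; lra). lra. }
  set (B := 4 * (K + 1) * (Sg + 1) / (1 - r)).
  assert (HB : 0 < B). { unfold B. apply Rdiv_lt_0_compat; [|lra]. nra. }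
  destruct (pow_lt_1_zero r ltac:(rewrite Rabs_right; lra) (eps / B)) as [N HN].
  { apply Rdiv_lt_0_compat; auto. }
  specialize (HN N (le_n _)). rewrite Rabs_right in HN. 2:{ apply Rle_ge, pow_le; lra. }
  exists (sqL N). intros L HL Hdis.
  set (M := bnd L).
  set (g := fun x : P2 => K * hZ (fst x) * hZ (snd x)).
  assert (Hg : forall x, 0 <= g x). { intros. unfold g. pose proof (hZ_nonneg (fst x)). pose proof (hZ_nonneg (snd x)). apply Rmult_le_pos; auto. apply Rmult_le_pos; auto. }
  apply Rle_trans with (sumLR g L).
  { apply sumLR_le. intros [a b] _. apply HF. }
  set (p := fun x : P2 => Nat.ltb N (Z.abs_nat (fst x))).
  rewrite (sumLR_filter g p L).
  assert (HM : forall x, In x L -> (Z.abs_nat (fst x) <= M /\ Z.abs_nat (snd x) <= M)%nat).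
  { intros x Hx. pose proof (bnd_sq L M (le_n _) x Hx). destruct x as [a b]. apply In_sqL in H. simpl. lia. }
  assert (A1 : sumLR g (filter p L) <= K * (2 * (r ^ S N / (1 - r))) * Sg).
  { eapply Rle_trans. apply (sumLR_incl g _ (list_prod (rng N M) (full M))); auto. apply NoDup_filter; auto.
    - intros [a b] Hx. apply filter_In in Hx. destruct Hx as [Hx Hp]. unfold p in Hp. simpl in Hp.
      apply Nat.ltb_lt in Hp. apply HM in Hx. simpl in Hx. apply in_prod. apply In_rng; lia. apply In_full; lia.
    - unfold g. rewrite sumLR_prod_mul.
      pose proof (sum_rng N M). pose proof (sum_full M).
      pose proof (sumLR_nonneg hZ (rng N M) hZ_nonneg).
      apply Rmult_le_compat; auto. apply Rmult_le_pos; auto. apply sumLR_nonneg, hZ_nonneg.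
      apply Rmult_le_compat_l; auto. }
  assert (A2 : sumLR g (filter (fun x => negb (p x)) L) <= K * Sg * (2 * (r ^ S N / (1 - r)))).
  { eapply Rle_trans. apply (sumLR_incl g _ (list_prod (full M) (rng N M))); auto. apply NoDup_filter; auto.
    - intros [a b] Hx. apply filter_In in Hx. destruct Hx as [Hx Hp]. unfold p in Hp. simpl in Hp.
      apply Bool.negb_true_iff, Nat.ltb_ge in Hp.
      assert (Hn : ~ In (a,b) (sqL N)) by (apply Hdis; auto).
      rewrite In_sqL in Hn. apply HM in Hx. simpl in Hx. apply in_prod. apply In_full; lia. apply In_rng; lia.
    - unfold g. rewrite sumLR_prod_mul.
      pose proof (sum_rng N M). pose proof (sum_full M).
      pose proof (sumLR_nonneg hZ (rng N M) hZ_nonneg).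
      pose proof (sumLR_nonneg hZ (full M) hZ_nonneg).
      apply Rmult_le_compat; auto. apply Rmult_le_pos; auto.
      apply Rmult_le_compat_l; auto. }
  assert (Hp1 : r ^ S N <= r ^ N). { simpl. pose proof (pow_le r N ltac:(lra)). nra. }
  assert (Hrn : 0 <= r ^ S N) by (apply pow_le; lra).
  assert (Hfin : 4 * K * Sg * (r ^ S N / (1 - r)) <= B * r ^ N).
  { assert (E: B * r^N = 4*(K+1)*(Sg+1)*(r^N/(1-r))) by (unfold B; field; lra).
    rewrite E. apply Rmult_le_compat.
    - apply Rmult_le_pos; [lra|auto].
    - apply Rdiv_le_0_compat; lra.
    - nra.
    - unfold Rdiv. apply Rmult_le_compat_r; auto. apply Rlt_le, Rinv_0_lt_compat; lra. }
  assert (B * r ^ N < eps). { apply (Rmult_lt_compat_l B) in HN; auto. field_simplify in HN; lra. }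
  nra.
Qed.
End Geo.

Lemma cexp_add z w : cexp (Cplus z w) = Cmult (cexp z) (cexp w).
Proof.
  destruct z as [a b], w as [c d]. unfold cexp, Cplus, Cmult; simpl.
  rewrite exp_plus, cos_plus, sin_plus. f_equal; ring.
Qed.

Lemma cexp_0 : cexp (RtoC 0) = RtoC 1.
Proof. unfold cexp; simpl. rewrite exp_0, cos_0, sin_0. unfold RtoC. f_equal; ring. Qed.

Lemma Cmod_cexp z : Cmod (cexp z) = exp (Re z).
Proof.
  destruct z as [a b]. unfold cexp, Cmod; cbn [fst snd Re Im].
  replace ((exp a * cos b) ^ 2 + ((exp a * sin b) ^ 2)) with ((exp a)^2 * ((sin b)^2 + (cos b)^2)) by ring.
  assert (E : (sin b)^2 + (cos b)^2 = 1) by (rewrite <- !Rsqr_pow2; apply sin2_cos2).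
  rewrite E, Rmult_1_r. apply sqrt_pow2. apply Rlt_le, exp_pos.
Qed.

Lemma qpow_add tau a b : qpow tau (a + b) = Cmult (qpow tau a) (qpow tau b).
Proof.
  unfold qpow. rewrite <- cexp_add. f_equal.
  replace (2 * PI * (a + b)) with (2 * PI * a + 2 * PI * b) by ring.
  rewrite RtoC_plus. ring.
Qed.

Lemma qpow_ext tau a b : a = b -> qpow tau a = qpow tau b.
Proof. intros ->; reflexivity. Qed.

Lemma Cmod_qpow tau a : Cmod (qpow tau a) = exp (- (2 * PI * a * Im tau)).
Proof.
  unfold qpow. rewrite Cmod_cexp. f_equal. destruct tau as [u v]. unfold Cmult, Ci, RtoC; simpl. ring.
Qed.

Definition par (k : Z) : R := if Z.even k then 1 else -1.

Lemma par_succ k : par (k + 1) = - par k.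
Proof. unfold par. rewrite Z.even_add. simpl. destruct (Z.even k); simpl; lra. Qed.
Lemma par_pred k : par (k - 1) = - par k.
Proof. unfold par. rewrite Z.even_sub. simpl. destruct (Z.even k); simpl; lra. Qed.

Lemma cos_kPI k : cos (PI * IZR k) = par k.
Proof.
  induction k using Z.peano_ind.
  - simpl. rewrite Rmult_0_r, cos_0. reflexivity.
  - rewrite <- Z.add_1_r, par_succ, plus_IZR.
    replace (PI * (IZR k + 1)) with (PI * IZR k + PI) by ring. rewrite neg_cos, IHk. ring.
  - rewrite <- Z.sub_1_r, par_pred, minus_IZR.
    replace (PI * (IZR k - 1)) with (PI * IZR k - PI) by ring.
    rewrite cos_minus, cos_PI, sin_PI, IHk. ring.
Qed.

Lemma sgn_scale c y : 0 < c -> sgn (c * y) = sgn y.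
Proof.
  intros Hc. destruct (Rtotal_order y 0) as [H|[H|H]].
  - rewrite !sgn_neg; auto. nra.
  - subst. rewrite Rmult_0_r. reflexivity.
  - rewrite !sgn_pos; auto. nra.
Qed.

Lemma sgn_opp y : sgn (- y) = - sgn y.
Proof.
  destruct (Rtotal_order y 0) as [H|[H|H]].
  - rewrite (sgn_pos (-y)), (sgn_neg y); lra.
  - subst. rewrite Ropp_0. unfold sgn. destruct (Rlt_dec 0 0); [lra|]. destruct (Rlt_dec 0 0); [lra|]. ring.
  - rewrite (sgn_neg (-y)), (sgn_pos y); lra.
Qed.

Lemma Rabs_sgn y : Rabs (sgn y) <= 1.
Proof. unfold sgn. destruct (Rlt_dec 0 y); [|destruct (Rlt_dec y 0)]; unfold Rabs; destruct Rcase_abs; lra. Qed.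

Definition ph (m1 m2 : Z) : C := Cmult (cexp (Cmult Ci (RtoC (PI/3)))) (RtoC (par (m1 + m2))).
Definition Qn (m1 m2 : Z) : R := 3 * (IZR m1 + 1/3) ^ 2 - (IZR m2) ^ 2.
Definition dA (m1 m2 : Z) : R := IZR m1 + 1/3 - IZR m2.
Definition dB (m1 m2 : Z) : R := IZR m1 + 1/3 + IZR m2.
Definition Gm (tau : C) (d : R) : R := sgn d * inc_gamma (1/2) (6 * PI * d ^ 2 * Im tau).

Definition Sth tau (m : Z*Z) : C :=
  Cmult (RtoC (sgn (dA (fst m) (snd m)) + sgn (dB (fst m) (snd m)))) (Cmult (ph (fst m) (snd m)) (qpow tau (Qn (fst m) (snd m)))).
Definition Ath tau (m : Z*Z) : C :=
  Cmult (RtoC (- Gm tau (dA (fst m) (snd m)) / sqrt PI)) (Cmult (ph (fst m) (snd m)) (qpow tau (Qn (fst m) (snd m)))).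
Definition Bth tau (m : Z*Z) : C :=
  Cmult (RtoC (- Gm tau (dB (fst m) (snd m)) / sqrt PI)) (Cmult (ph (fst m) (snd m)) (qpow tau (Qn (fst m) (snd m)))).

Lemma d_nonzero (a b : Z) : IZR a + 1/3 + IZR b <> 0.
Proof.
  intros H. assert (IZR (a + b) * 3 = -1) by (rewrite plus_IZR; lra).
  rewrite <- (mult_IZR _ 3) in H0. apply eq_IZR in H0. lia.
Qed.

Lemma dA_nz m1 m2 : dA m1 m2 <> 0.
Proof. unfold dA. replace (IZR m1 + 1/3 - IZR m2) with (IZR m1 + 1/3 + IZR (- m2)) by (rewrite opp_IZR; ring). apply d_nonzero. Qed.
Lemma dB_nz m1 m2 : dB m1 m2 <> 0.
Proof. apply d_nonzero. Qed.

Lemma cexp_iR x : cexp (Cmult Ci (RtoC x)) = (cos x, sin x).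
Proof.
  replace (Cmult Ci (RtoC x)) with ((0, x) : C) by (unfold Cmult, Ci, RtoC; simpl; f_equal; ring).
  unfold cexp; simpl. rewrite exp_0. f_equal; ring.
Qed.

Lemma phase_eq m1 m2 : cexp (Cmult Ci (RtoC (2 * PI * Bf bvec (IZR m1 + fst avec, IZR m2 + snd avec)))) = ph m1 m2.
Proof.
  unfold ph. rewrite <- (cos_kPI (m1 + m2)).
  replace (2 * PI * Bf bvec (IZR m1 + fst avec, IZR m2 + snd avec)) with (PI/3 + PI * IZR (m1 + m2)).
  2:{ unfold Bf, Qf, bvec, avec; simpl. rewrite plus_IZR. field. }
  rewrite RtoC_plus. rewrite Cmult_plus_distr_l. rewrite cexp_add. f_equal.
  rewrite cexp_iR. rewrite (sin_eq_0_1 (PI * IZR (m1 + m2))). reflexivity. exists (m1+m2)%Z. ring.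
Qed.

Lemma theta_decomp tau m1 m2 : 0 < Im tau ->
  theta_term tau m1 m2 = Cplus (Cplus (Sth tau (m1,m2)) (Ath tau (m1,m2))) (Bth tau (m1,m2)).
Proof.
  intros Hv. unfold theta_term. rewrite phase_eq.
  replace (Qf (IZR m1 + fst avec, IZR m2 + snd avec)) with (Qn m1 m2) by (unfold Qf, Qn, avec; simpl; ring).
  set (v := Im tau) in *.
  assert (H6 : 0 < sqrt 6) by (apply sqrt_lt_R0; lra).
  assert (Hsv : 0 < sqrt v) by (apply sqrt_lt_R0; lra).
  set (c := 6 * sqrt v / sqrt 6).
  assert (Hc : 0 < c) by (unfold c; apply Rdiv_lt_0_compat; lra).
  assert (Hc2 : c ^ 2 = 6 * v).
  { unfold c. unfold Rdiv. rewrite !Rpow_mult_distr. rewrite pow_inv. rewrite <- !Rsqr_pow2.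
    rewrite !Rsqr_sqrt; try lra. unfold Rsqr. field. }
  replace (Bf Defs.c1 (IZR m1 + fst avec, IZR m2 + snd avec) * sqrt v / sqrt (- Qf Defs.c1)) with (c * dA m1 m2).
  2:{ replace (- Qf Defs.c1) with 6 by (unfold Qf, Defs.c1; simpl; ring).
      unfold c, Bf, Qf, Defs.c1, avec, dA; simpl. field. lra. }
  replace (Bf Defs.c2 (IZR m1 + fst avec, IZR m2 + snd avec) * sqrt v / sqrt (- Qf Defs.c2)) with (c * (- dB m1 m2)).
  2:{ replace (- Qf Defs.c2) with 6 by (unfold Qf, Defs.c2; simpl; ring).
      unfold c, Bf, Qf, Defs.c2, avec, dB; simpl. field. lra. }
  assert (N1 : c * dA m1 m2 <> 0) by (apply Rmult_integral_contrapositive; split; [lra|apply dA_nz]).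
  assert (N2 : c * (- dB m1 m2) <> 0).
  { apply Rmult_integral_contrapositive; split; [lra|]. pose proof (dB_nz m1 m2). lra. }
  rewrite (Efun_core _ N1), (Efun_core _ N2).
  rewrite !sgn_scale, sgn_opp by auto.
  replace (PI * (c * dA m1 m2) ^ 2) with (6 * PI * dA m1 m2 ^ 2 * v) by (rewrite Rpow_mult_distr, Hc2; ring).
  replace (PI * (c * - dB m1 m2) ^ 2) with (6 * PI * dB m1 m2 ^ 2 * v) by (rewrite Rpow_mult_distr, Hc2; ring).
  unfold Sth, Ath, Bth, Gm. cbn [fst snd]. fold v.
  pose proof sqrtPI_pos.
  match goal with |- Cmult (RtoC ?x) _ = _ => replace x with
    ((sgn (dA m1 m2) + sgn (dB m1 m2)) + (- (sgn (dA m1 m2) * inc_gamma (1 / 2) (6 * PI * dA m1 m2 ^ 2 * v)) / sqrt PI)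
      + (- (sgn (dB m1 m2) * inc_gamma (1 / 2) (6 * PI * dB m1 m2 ^ 2 * v)) / sqrt PI)) by (field; lra) end.
  rewrite !RtoC_plus. ring.
Qed.

Lemma exp_pow_INR a k : exp a ^ k = exp (a * INR k).
Proof.
  induction k. simpl. rewrite Rmult_0_r, exp_0. reflexivity.
  rewrite S_INR. simpl. rewrite IHk, <- exp_plus. f_equal. ring.
Qed.

Lemma INR_abs_nat z : INR (Z.abs_nat z) = IZR (Z.abs z).
Proof. rewrite INR_IZR_INZ. f_equal. lia. Qed.

Lemma hZ_exp c z : hZ (exp (- c)) z = exp (- c * IZR (Z.abs z)).
Proof. unfold hZ. rewrite exp_pow_INR, INR_abs_nat. reflexivity. Qed.

Lemma Cmod_RtoC_mult (x : R) (z : C) : Cmod (Cmult (RtoC x) z) = Rabs x * Cmod z.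
Proof. rewrite Cmod_mult, Cmod_R. reflexivity. Qed.

Definition Hmt tau (e : Z) (u : Z*Z) : C := Hminus_term tau (IZR e) (fst u) (snd u).

Lemma sq_ge_abs k : (k*k >= Z.abs k)%Z.
Proof. destruct (Z_le_gt_dec 0 k). rewrite Z.abs_eq by lia. nia. rewrite Z.abs_neq by lia. nia. Qed.

Lemma zineq1 (r e : Z) : (e = 0 \/ e = 1)%Z -> ((6*r+3*e+1)*(6*r+3*e+1) >= 3 * Z.abs r)%Z.
Proof.
  intros He. set (k := (6*r+3*e+1)%Z). pose proof (sq_ge_abs k).
  destruct (Z_le_gt_dec 0 r).
  - rewrite Z.abs_eq by lia. rewrite Z.abs_eq in H by (unfold k; lia). unfold k in *; lia.
  - rewrite Z.abs_neq by lia. assert (k <= -2)%Z by (unfold k; lia).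
    assert (k * k >= -2 * k)%Z by nia. unfold k in *; lia.
Qed.

Lemma zineq2 (n e : Z) : (e = 0 \/ e = 1)%Z -> ((2*n+e+1)*(2*n+e+1) >= Z.abs n - 1)%Z.
Proof. intros He. pose proof (sq_ge_abs (2*n+e+1)). lia. Qed.

Lemma Hmt_bound tau e n r : 0 < Im tau -> (e = 0 \/ e = 1)%Z ->
  Cmod (Hmt tau e (n,r)) <= (sqrt PI * exp (PI * Im tau)) * hZ (exp (- (PI * Im tau))) n * hZ (exp (- (PI * Im tau))) r.
Proof.
  intros Hv He. set (v := Im tau) in *.
  unfold Hmt, Hminus_term. cbn [fst snd]. fold v.
  set (m := 2 * IZR r + IZR e + 1 / 3).
  rewrite Cmod_RtoC_mult, Cmod_qpow. fold v.
  assert (Hm : m <> 0).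
  { unfold m. intros H. assert (IZR (6*r + 3*e + 1) = 0) by (rewrite !plus_IZR, !mult_IZR; simpl; lra).
    apply eq_IZR in H0. lia. }
  set (x := m * sqrt (6 * v)).
  assert (Hx : x <> 0). { unfold x. apply Rmult_integral_contrapositive. split; auto. apply Rgt_not_eq, sqrt_lt_R0. lra. }
  assert (Ex : 6 * PI * m ^ 2 * v = PI * x ^ 2).
  { unfold x. rewrite Rpow_mult_distr. rewrite <- Rsqr_pow2 with (x := sqrt (6 * v)). rewrite Rsqr_sqrt by lra. ring. }
  rewrite Ex. destruct (incg_bound x Hx) as [I0 I1].
  rewrite Rabs_mult. rewrite (Rabs_right (inc_gamma _ _)) by lra.
  pose proof (Rabs_sgn m). pose proof (Rabs_pos (sgn m)).
  pose proof sqrtPI_pos.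
  rewrite !hZ_exp.
  apply Rle_trans with (sqrt PI * exp (- PI * x ^ 2) * exp (- (2 * PI * (- 3 / 2 * m ^ 2 + 1 / 2 * (2 * IZR n + IZR e + 1) ^ 2) * v))).
  { apply Rmult_le_compat_r. apply Rlt_le, exp_pos.
    apply Rle_trans with (1 * inc_gamma (1/2) (PI * x ^ 2)). apply Rmult_le_compat_r; lra. lra. }
  rewrite !Rmult_assoc. apply Rmult_le_compat_l. lra.
  rewrite <- !exp_plus. apply exp_le_mono.
  replace (- PI * x ^ 2) with (- (6 * PI * m ^ 2 * v)) by (rewrite Ex; ring).
  pose proof (zineq1 r e He) as Z1. pose proof (zineq2 n e He) as Z2.
  apply Z.ge_le in Z1. apply Z.ge_le in Z2. apply IZR_le in Z1. apply IZR_le in Z2.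
  rewrite !mult_IZR, !plus_IZR, !mult_IZR in Z1. rewrite minus_IZR, !mult_IZR, !plus_IZR, !mult_IZR in Z2.
  simpl in Z1, Z2.
  assert (Hpv : 0 < PI * v) by (pose proof PI_RGT_0; nra).
  assert (A1 : IZR (Z.abs r) <= 3 * m ^ 2). { unfold m. nra. }
  assert (A2 : IZR (Z.abs n) - 1 <= (2 * IZR n + IZR e + 1) ^ 2). { nra. }
  nra.
Qed.

Lemma par_eq a b : (exists k, a = b + 2 * k)%Z -> par a = par b.
Proof.
  intros [k ->]. unfold par. rewrite Z.even_add, Z.even_mul. simpl.
  destruct (Z.even b); reflexivity.
Qed.

Definition cA : C := Cmult (RtoC (- / sqrt PI)) (cexp (Cmult Ci (RtoC (PI/3)))).

Definition phiA (e : Z) (u : Z*Z) : Z*Z := (fst u - snd u, fst u - 3 * snd u - e)%Z.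
Definition phiB (e : Z) (u : Z*Z) : Z*Z := (fst u - snd u, 3 * snd u + e - fst u)%Z.

Lemma Qn_eq (m1 m2 : Z) (d : R) : 3 * (IZR m1 + 1/3) ^ 2 - IZR m2 ^ 2 = -3/2 * d ^ 2 + 1/2 * (3 * (IZR m1 + 1/3) - d) ^ 2 ->
  True.
Proof. auto. Qed.

Ltac pushZ := rewrite ?minus_IZR, ?plus_IZR, ?mult_IZR, ?opp_IZR.

Lemma Ath_phiA tau e u : (e = 0 \/ e = 1)%Z ->
  Ath tau (phiA e u) = Cmult (Cmult cA (RtoC (par e))) (Hmt tau e u).
Proof.
  intros He. destruct u as [n r]. unfold Ath, phiA, Hmt, Hminus_term, ph, cA, Gm. cbn [fst snd].
  assert (D : dA (n - r)%Z (n - 3 * r - e)%Z = 2 * IZR r + IZR e + 1 / 3).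
  { unfold dA. pushZ. simpl. ring. }
  rewrite D.
  assert (Q : Qn (n - r)%Z (n - 3 * r - e)%Z = - 3 / 2 * (2 * IZR r + IZR e + 1 / 3) ^ 2 + 1 / 2 * (2 * IZR n + IZR e + 1) ^ 2).
  { unfold Qn. pushZ. simpl. field. }
  rewrite Q.
  rewrite (par_eq (n - r + (n - 3 * r - e))%Z e). 2:{ exists (n - 2 * r - e)%Z. ring. }
  replace (- (sgn (2 * IZR r + IZR e + 1 / 3) * inc_gamma (1 / 2) (6 * PI * (2 * IZR r + IZR e + 1 / 3) ^ 2 * Im tau)) / sqrt PI)
    with ((- / sqrt PI) * (sgn (2 * IZR r + IZR e + 1 / 3) * inc_gamma (1 / 2) (6 * PI * (2 * IZR r + IZR e + 1 / 3) ^ 2 * Im tau))).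
  2:{ field. pose proof sqrtPI_pos; lra. }
  rewrite RtoC_mult. ring.
Qed.

Lemma Bth_phiB tau e u : (e = 0 \/ e = 1)%Z ->
  Bth tau (phiB e u) = Cmult (Cmult cA (RtoC (par e))) (Hmt tau e u).
Proof.
  intros He. destruct u as [n r]. unfold Bth, phiB, Hmt, Hminus_term, ph, cA, Gm. cbn [fst snd].
  assert (D : dB (n - r)%Z (3 * r + e - n)%Z = 2 * IZR r + IZR e + 1 / 3).
  { unfold dB. pushZ. simpl. ring. }
  rewrite D.
  assert (Q : Qn (n - r)%Z (3 * r + e - n)%Z = - 3 / 2 * (2 * IZR r + IZR e + 1 / 3) ^ 2 + 1 / 2 * (2 * IZR n + IZR e + 1) ^ 2).
  { unfold Qn. pushZ. simpl. field. }
  rewrite Q.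
  rewrite (par_eq (n - r + (3 * r + e - n))%Z e). 2:{ exists (r)%Z. ring. }
  replace (- (sgn (2 * IZR r + IZR e + 1 / 3) * inc_gamma (1 / 2) (6 * PI * (2 * IZR r + IZR e + 1 / 3) ^ 2 * Im tau)) / sqrt PI)
    with ((- / sqrt PI) * (sgn (2 * IZR r + IZR e + 1 / 3) * inc_gamma (1 / 2) (6 * PI * (2 * IZR r + IZR e + 1 / 3) ^ 2 * Im tau))).
  2:{ field. pose proof sqrtPI_pos; lra. }
  rewrite RtoC_mult. ring.
Qed.

Definition PA (e : Z) (m : Z*Z) : bool := Z.even (fst m - snd m - e).
Definition PB (e : Z) (m : Z*Z) : bool := Z.even (fst m + snd m - e).
Definition psiA (e : Z) (m : Z*Z) : Z*Z := (fst m + (fst m - snd m - e) / 2, (fst m - snd m - e) / 2)%Z.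
Definition psiB (e : Z) (m : Z*Z) : Z*Z := (fst m + (fst m + snd m - e) / 2, (fst m + snd m - e) / 2)%Z.
Definition Ae tau e m : C := if PA e m then Ath tau m else RtoC 0.
Definition Be tau e m : C := if PB e m then Bth tau m else RtoC 0.

Lemma even_half x : Z.even x = true -> (2 * (x / 2) = x)%Z.
Proof. intros H. apply Z.even_spec in H. destruct H as [k ->]. replace (2 * k)%Z with (k * 2)%Z by ring. rewrite Z.div_mul by lia. ring. Qed.

Lemma usum_Ae tau e s : (e = 0 \/ e = 1)%Z -> has_usum (Hmt tau e) s ->
  has_usum (Ae tau e) (Cmult (Cmult cA (RtoC (par e))) s).
Proof.
  intros He Hs.
  apply (usum_transfer (Ae tau e) (phiA e) (psiA e) (PA e)).
  - intros [n r]. unfold psiA, phiA; cbn [fst snd]. f_equal.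
    + replace (n - r - (n - 3 * r - e) - e)%Z with (r * 2)%Z by ring. rewrite Z.div_mul by lia. ring.
    + replace (n - r - (n - 3 * r - e) - e)%Z with (r * 2)%Z by ring. rewrite Z.div_mul by lia. ring.
  - intros [m1 m2] H. unfold PA in H. cbn [fst snd] in H. apply even_half in H.
    unfold psiA, phiA; cbn [fst snd]. f_equal; lia.
  - intros [n r]. unfold PA, phiA; cbn [fst snd].
    replace (n - r - (n - 3 * r - e) - e)%Z with (2 * r)%Z by ring. rewrite Z.even_mul. reflexivity.
  - intros x H. unfold Ae. rewrite H. reflexivity.
  - apply (usum_ext (fun u => Cmult (Cmult cA (RtoC (par e))) (Hmt tau e u))).
    + intros u. unfold Ae. rewrite <- Ath_phiA by auto.
      assert (PA e (phiA e u) = true).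
      { destruct u as [n r]. unfold PA, phiA; cbn [fst snd].
        replace (n - r - (n - 3 * r - e) - e)%Z with (2 * r)%Z by ring. rewrite Z.even_mul. reflexivity. }
      rewrite H. reflexivity.
    + apply usum_scal; auto.
Qed.

Lemma usum_Be tau e s : (e = 0 \/ e = 1)%Z -> has_usum (Hmt tau e) s ->
  has_usum (Be tau e) (Cmult (Cmult cA (RtoC (par e))) s).
Proof.
  intros He Hs.
  assert (HP : forall u, PB e (phiB e u) = true).
  { intros [n r]. unfold PB, phiB; cbn [fst snd].
    replace (n - r + (3 * r + e - n) - e)%Z with (2 * r)%Z by ring. rewrite Z.even_mul. reflexivity. }
  apply (usum_transfer (Be tau e) (phiB e) (psiB e) (PB e)).
  - intros [n r]. unfold psiB, phiB; cbn [fst snd].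
    replace (n - r + (3 * r + e - n) - e)%Z with (r * 2)%Z by ring. rewrite Z.div_mul by lia. f_equal; ring.
  - intros [m1 m2] H. unfold PB in H. cbn [fst snd] in H. apply even_half in H.
    unfold psiB, phiB; cbn [fst snd]. f_equal; lia.
  - exact HP.
  - intros x H. unfold Be. rewrite H. reflexivity.
  - apply (usum_ext (fun u => Cmult (Cmult cA (RtoC (par e))) (Hmt tau e u))).
    + intros u. unfold Be. rewrite <- Bth_phiB by auto. rewrite HP. reflexivity.
    + apply usum_scal; auto.
Qed.

Lemma Ath_split tau m : Ath tau m = Cplus (Ae tau 0 m) (Ae tau 1 m).
Proof.
  unfold Ae, PA. replace (fst m - snd m - 1)%Z with (Z.pred (fst m - snd m - 0))%Z by lia.
  rewrite Z.even_pred, <- Z.negb_even. destruct (Z.even (fst m - snd m - 0)); simpl; ring.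
Qed.

Lemma Bth_split tau m : Bth tau m = Cplus (Be tau 0 m) (Be tau 1 m).
Proof.
  unfold Be, PB. replace (fst m + snd m - 1)%Z with (Z.pred (fst m + snd m - 0))%Z by lia.
  rewrite Z.even_pred, <- Z.negb_even. destruct (Z.even (fst m + snd m - 0)); simpl; ring.
Qed.

Lemma usum_Ath tau s0 s1 : has_usum (Hmt tau 0) s0 -> has_usum (Hmt tau 1) s1 ->
  has_usum (Ath tau) (Cmult cA (Cminus s0 s1)).
Proof.
  intros H0 H1.
  apply (usum_ext (fun m => Cplus (Ae tau 0 m) (Ae tau 1 m))). { intros; symmetry; apply Ath_split. }
  replace (Cmult cA (Cminus s0 s1)) with (Cplus (Cmult (Cmult cA (RtoC (par 0))) s0) (Cmult (Cmult cA (RtoC (par 1))) s1)).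
  2:{ unfold par; simpl. replace (RtoC (-1)) with (Copp (RtoC 1)) by (unfold RtoC, Copp; simpl; f_equal; ring). ring. }
  apply usum_plus; apply usum_Ae; auto.
Qed.

Lemma usum_Bth tau s0 s1 : has_usum (Hmt tau 0) s0 -> has_usum (Hmt tau 1) s1 ->
  has_usum (Bth tau) (Cmult cA (Cminus s0 s1)).
Proof.
  intros H0 H1.
  apply (usum_ext (fun m => Cplus (Be tau 0 m) (Be tau 1 m))). { intros; symmetry; apply Bth_split. }
  replace (Cmult cA (Cminus s0 s1)) with (Cplus (Cmult (Cmult cA (RtoC (par 0))) s0) (Cmult (Cmult cA (RtoC (par 1))) s1)).
  2:{ unfold par; simpl. replace (RtoC (-1)) with (Copp (RtoC 1)) by (unfold RtoC, Copp; simpl; f_equal; ring). ring. }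
  apply usum_plus; apply usum_Be; auto.
Qed.

Definition sig (m : Z*Z) : R :=
  if Z.leb (Z.abs (snd m)) (fst m) then 1 else if Z.leb (fst m) (- Z.abs (snd m) - 1) then -1 else 0.
Definition Sp tau (m : Z*Z) : C :=
  Cmult (RtoC (sig m * par (fst m + snd m))) (qpow tau (3 * IZR (fst m) ^ 2 + 2 * IZR (fst m) - IZR (snd m) ^ 2)).
Definition cS tau : C := Cmult (Cmult (RtoC 2) (cexp (Cmult Ci (RtoC (PI/3))))) (qpow tau (1/3)).

Lemma third_pos k : (0 <= k)%Z -> 0 < IZR k + 1/3.
Proof. intros. apply IZR_le in H. lra. Qed.
Lemma third_neg k : (k < 0)%Z -> IZR k + 1/3 < 0.
Proof. intros. assert (k <= -1)%Z by lia. apply IZR_le in H0. lra. Qed.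

Lemma sgn_sum m1 m2 : sgn (dA m1 m2) + sgn (dB m1 m2) = 2 * sig (m1, m2).
Proof.
  unfold dA, dB, sig. cbn [fst snd].
  replace (IZR m1 + 1/3 - IZR m2) with (IZR (m1 - m2) + 1/3) by (rewrite minus_IZR; ring).
  replace (IZR m1 + 1/3 + IZR m2) with (IZR (m1 + m2) + 1/3) by (rewrite plus_IZR; ring).
  destruct (Z.leb_spec (Z.abs m2) m1).
  - rewrite !sgn_pos by (apply third_pos; lia). ring.
  - destruct (Z.leb_spec m1 (- Z.abs m2 - 1)).
    + rewrite !sgn_neg by (apply third_neg; lia). ring.
    + destruct (Z_le_gt_dec 0 m2).
      * rewrite (sgn_neg (IZR (m1 - m2) + 1/3)) by (apply third_neg; lia).
        rewrite (sgn_pos (IZR (m1 + m2) + 1/3)) by (apply third_pos; lia). ring.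
      * rewrite (sgn_pos (IZR (m1 - m2) + 1/3)) by (apply third_pos; lia).
        rewrite (sgn_neg (IZR (m1 + m2) + 1/3)) by (apply third_neg; lia). ring.
Qed.

Lemma Sth_eq tau m : Sth tau m = Cmult (cS tau) (Sp tau m).
Proof.
  destruct m as [m1 m2]. unfold Sth, Sp, cS, ph. cbn [fst snd].
  rewrite sgn_sum.
  rewrite (qpow_ext tau (Qn m1 m2) (1/3 + (3 * IZR m1 ^ 2 + 2 * IZR m1 - IZR m2 ^ 2))) by (unfold Qn; field).
  rewrite qpow_add. rewrite !RtoC_mult. ring.
Qed.

Lemma pow_m1_par k : (-1) ^ k = par (Z.of_nat k).
Proof.
  induction k. reflexivity.
  rewrite Nat2Z.inj_succ, <- Z.add_1_r, par_succ. simpl. rewrite IHk. ring.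
Qed.

Definition shell (n : nat) : list (Z*Z) :=
  map (fun k => (Z.of_nat n, zshift n k)) (seq 0 (S (2 * n))) ++
  map (fun k => (- Z.of_nat n - 1, zshift n k)%Z) (seq 0 (S (2 * n))).

Lemma H_term_shell tau n : H_term tau n = sumL (Sp tau) (shell n).
Proof.
  unfold H_term, shell. rewrite sum_n_sumL, sumL_app, !sumL_map, <- sumL_plus.
  rewrite <- !sumL_scal. apply sumL_ext_in. intros k Hk. apply in_seq in Hk.
  unfold Sp, sig, zshift. cbn [fst snd].
  rewrite (proj2 (Z.leb_le _ _)) by lia.
  replace (Z.of_nat n + (Z.of_nat k - Z.of_nat n))%Z with (Z.of_nat k) by ring.
  destruct (Z.leb_spec (Z.abs (Z.of_nat k - Z.of_nat n)) (- Z.of_nat n - 1)). lia.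
  rewrite (proj2 (Z.leb_le _ _)) by lia.
  replace (- Z.of_nat n - 1 + (Z.of_nat k - Z.of_nat n))%Z with ((Z.of_nat k - 1) + 2 * (- Z.of_nat n))%Z by ring.
  rewrite (par_eq (Z.of_nat k - 1 + 2 * - Z.of_nat n)%Z (Z.of_nat k - 1)%Z) by (exists (- Z.of_nat n)%Z; reflexivity).
  rewrite par_pred, <- !pow_m1_par.
  rewrite <- !INR_IZR_INZ.
  rewrite minus_IZR, <- !INR_IZR_INZ.
  rewrite minus_IZR, opp_IZR, <- INR_IZR_INZ.
  set (nr := INR n). set (kr := INR k).
  assert (E : (-1) ^ n * (-1) ^ n = 1). { rewrite <- Rpow_mult_distr. replace (-1 * -1) with 1 by ring. apply pow1. }
  rewrite (qpow_ext tau (3 * nr ^ 2 + 2 * nr - (kr - nr) ^ 2) ((3 * nr ^ 2 + 2 * nr) + (- (kr - nr) ^ 2))) by ring.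
  rewrite (qpow_ext tau (3 * (- nr - 1) ^ 2 + 2 * (- nr - 1) - (kr - nr) ^ 2) ((3 * nr ^ 2 + 2 * nr) + (2 * nr + 1) + (- (kr - nr) ^ 2))) by ring.
  rewrite !qpow_add.
  replace (RtoC ((-1) ^ k * (-1) ^ n)) with (Cmult (RtoC ((-1)^k)) (RtoC ((-1)^n))) by (rewrite RtoC_mult; reflexivity).
  replace (RtoC (1 * (-1) ^ k)) with (RtoC ((-1)^k)) by (f_equal; ring).
  replace (RtoC (-1 * - (-1) ^ k)) with (RtoC ((-1)^k)) by (f_equal; ring).
  assert (Es : Cmult (RtoC ((-1)^n)) (RtoC ((-1)^n)) = RtoC 1) by (rewrite <- RtoC_mult, E; reflexivity).
  match goal with |- ?L = ?R => transitivity (Cmult (Cmult (RtoC ((-1)^n)) (RtoC ((-1)^n))) R) end.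
  ring. rewrite Es. ring.
Qed.

Lemma In_shell n a b : In (a,b) (shell n) -> ((a = Z.of_nat n \/ a = - Z.of_nat n - 1) /\ Z.abs b <= Z.of_nat n)%Z.
Proof.
  unfold shell. intros H. apply in_app_or in H. destruct H as [H|H]; apply in_map_iff in H;
  destruct H as [k [E Hk]]; apply in_seq in Hk; inversion E; subst; unfold zshift; lia.
Qed.

Lemma shell_In n a b : (Z.abs b <= Z.of_nat n)%Z -> (a = Z.of_nat n \/ a = - Z.of_nat n - 1)%Z -> In (a,b) (shell n).
Proof.
  intros Hb Ha. unfold shell. apply in_or_app. destruct Ha as [Ha|Ha]; [left|right];
  apply in_map_iff; exists (Z.to_nat (b + Z.of_nat n)); split; try (apply in_seq; lia);
  unfold zshift; f_equal; lia.
Qed.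

Lemma NoDup_shell n : NoDup (shell n).
Proof.
  unfold shell. apply NoDup_app.
  - apply NoDup_map_inj. intros x y E. inversion E. unfold zshift in *. lia. apply seq_NoDup.
  - apply NoDup_map_inj. intros x y E. inversion E. unfold zshift in *. lia. apply seq_NoDup.
  - intros [a b] H1 H2. apply in_map_iff in H1. apply in_map_iff in H2.
    destruct H1 as [k [E1 _]]. destruct H2 as [j [E2 _]]. inversion E1. inversion E2. lia.
Qed.

Lemma NoDup_flat_map {A B} (f : A -> list B) l :
  NoDup l -> (forall x, In x l -> NoDup (f x)) ->
  (forall x y z, In x l -> In y l -> x <> y -> In z (f x) -> In z (f y) -> False) ->
  NoDup (flat_map f l).
Proof.
  induction l as [|a l IH]; simpl; intros Hl Hf Hd. constructor.
  inversion Hl; subst. apply NoDup_app.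
  - apply Hf; left; auto.
  - apply IH; auto. intros x y z Hx Hy. apply Hd; right; auto.
  - intros z Hz Hz2. apply in_flat_map in Hz2. destruct Hz2 as [y [Hy Hzy]].
  apply (Hd a y z); auto. intros ->; contradiction.
Qed.

Definition shells N := flat_map shell (seq 0 (S N)).

Lemma NoDup_shells N : NoDup (shells N).
Proof.
  apply NoDup_flat_map. apply seq_NoDup. intros; apply NoDup_shell.
  intros x y [a b] _ _ Hxy H1 H2. apply In_shell in H1. apply In_shell in H2. lia.
Qed.

Lemma sumL_flat_map {A B} (F : B -> C) (f : A -> list B) l : sumL F (flat_map f l) = sumL (fun x => sumL F (f x)) l.
Proof. induction l; simpl; auto. rewrite sumL_app, IHl. reflexivity. Qed.

Lemma sum_upto_H tau N : sum_upto (H_term tau) N = sumL (Sp tau) (shells N).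
Proof.
  unfold sum_upto, shells. rewrite sum_n_sumL, sumL_flat_map. apply sumL_ext_in. intros; apply H_term_shell.
Qed.

Lemma supp_shells N a b : sig (a,b) <> 0 -> (Z.abs a <= Z.of_nat N)%Z -> In (a,b) (shells N).
Proof.
  intros Hs HN. unfold sig in Hs. cbn [fst snd] in Hs. unfold shells. apply in_flat_map.
  destruct (Z.leb_spec (Z.abs b) a).
  - exists (Z.to_nat a). split. apply in_seq. lia. apply shell_In; lia.
  - destruct (Z.leb_spec a (- Z.abs b - 1)). 2:{ lra. }
    exists (Z.to_nat (- a - 1)). split. apply in_seq. lia. apply shell_In; lia.
Qed.

Lemma usum_partial F s : has_usum F s -> forall eps, 0 < eps -> exists L0 : list P2, forall Ls, NoDup Ls ->
  (forall x, In x L0 -> F x <> RtoC 0 -> In x Ls) -> Cmod (Cminus (sumL F Ls) s) <= eps.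
Proof.
  intros H eps He. destruct (H eps He) as [L0 H0]. exists L0. intros Ls HLs Hsup.
  set (R' := filter (fun x => negb (inb x Ls)) (nodup zz_dec L0)).
  assert (E : sumL F (Ls ++ R') = sumL F Ls).
  { rewrite sumL_app. rewrite (sumL_zero F R'). ring.
    intros x Hx. unfold R' in Hx. apply filter_In in Hx. destruct Hx as [Hx Hn].
    apply Bool.negb_true_iff, inb_false in Hn. apply nodup_In in Hx.
    destruct (Ceq_dec (F x) (RtoC 0)); auto. exfalso; auto. }
  rewrite <- E. apply H0.
  - apply NoDup_app; auto. apply NoDup_filter, NoDup_nodup.
    intros x Hx Hx2. unfold R' in Hx2. apply filter_In in Hx2. destruct Hx2 as [_ Hn].
    apply Bool.negb_true_iff, inb_false in Hn. auto.
  - intros x Hx. apply in_or_app. destruct (In_dec zz_dec x Ls); auto. right.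
    unfold R'. apply filter_In. split. apply nodup_In; auto. apply Bool.negb_true_iff, inb_false; auto.
Qed.

Lemma sumH_conv tau s : has_usum (Sp tau) s -> has_sum_nat (H_term tau) s.
Proof.
  intros H. unfold has_sum_nat. apply (filterlim_locally (F := eventually)).
  intros eps. destruct (usum_partial _ _ H (eps/2)) as [L0 HL0]. destruct eps; simpl; lra.
  exists (bnd L0). intros N HN. apply (@norm_compat1 C_AbsRing C_NormedModule).
  rewrite sum_upto_H. eapply Rle_lt_trans. apply HL0. apply NoDup_shells.
  - intros [a b] Hx Hne. apply supp_shells.
    + intros Hs. apply Hne. unfold Sp. cbn [fst snd]. rewrite Hs. rewrite Rmult_0_l. ring.
    + pose proof (bnd_sq L0 N HN (a,b) Hx). apply In_sqL in H0. lia.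
  - destruct eps; simpl; lra.
Qed.

Lemma Sp_bound tau a b : 0 < Im tau ->
  Cmod (Sp tau (a,b)) <= 1 * hZ (exp (- (2 * PI * Im tau))) a * hZ (exp (- (2 * PI * Im tau))) b.
Proof.
  intros Hv. unfold Sp. cbn [fst snd]. rewrite Cmod_RtoC_mult, Cmod_qpow. rewrite !hZ_exp.
  unfold sig. cbn [fst snd].
  assert (Hpv : 0 < PI * Im tau) by (pose proof PI_RGT_0; nra).
  assert (Hpar : Rabs (par (a + b)) = 1). { unfold par. destruct (Z.even (a+b)); unfold Rabs; destruct Rcase_abs; lra. }
  destruct (Z.leb_spec (Z.abs b) a).
  - rewrite Rabs_mult, Hpar, Rabs_R1, Rmult_1_l, Rmult_1_l, Rmult_1_l. rewrite <- exp_plus. apply exp_le_mono.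
    assert (Z1 : (3*a*a + 2*a - b*b >= Z.abs a + Z.abs b)%Z).
    { rewrite (Z.abs_eq a) by lia. assert (Z.abs b * Z.abs b = b * b)%Z by (destruct (Z_le_gt_dec 0 b); [rewrite Z.abs_eq|rewrite Z.abs_neq]; lia).
      assert (0 <= Z.abs b)%Z by lia. assert (Z.abs b * Z.abs b <= a * a)%Z by nia. nia. }
    apply Z.ge_le, IZR_le in Z1. repeat progress rewrite ?minus_IZR, ?plus_IZR, ?mult_IZR in Z1.
    assert (0 <= 2 * PI * Im tau * (3 * IZR a ^ 2 + 2 * IZR a - IZR b ^ 2 - (IZR (Z.abs a) + IZR (Z.abs b)))).
    { apply Rmult_le_pos. lra. replace (IZR a ^ 2) with (IZR a * IZR a) by ring. replace (IZR b ^ 2) with (IZR b * IZR b) by ring. lra. }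
    lra.
  - destruct (Z.leb_spec a (- Z.abs b - 1)).
    + rewrite Rabs_mult, Hpar. replace (Rabs (-1)) with 1 by (unfold Rabs; destruct Rcase_abs; lra). rewrite Rmult_1_l, Rmult_1_l, Rmult_1_l. rewrite <- exp_plus. apply exp_le_mono.
      assert (Z1 : (3*a*a + 2*a - b*b >= Z.abs a + Z.abs b)%Z).
      { rewrite (Z.abs_neq a) by lia. assert (Z.abs b * Z.abs b = b * b)%Z by (destruct (Z_le_gt_dec 0 b); [rewrite Z.abs_eq|rewrite Z.abs_neq]; lia).
        nia. }
      apply Z.ge_le, IZR_le in Z1. repeat progress rewrite ?minus_IZR, ?plus_IZR, ?mult_IZR in Z1.
    assert (0 <= 2 * PI * Im tau * (3 * IZR a ^ 2 + 2 * IZR a - IZR b ^ 2 - (IZR (Z.abs a) + IZR (Z.abs b)))).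
    { apply Rmult_le_pos. lra. replace (IZR a ^ 2) with (IZR a * IZR a) by ring. replace (IZR b ^ 2) with (IZR b * IZR b) by ring. lra. }
    lra.
    + rewrite Rmult_0_l, Rabs_R0, Rmult_0_l. rewrite Rmult_1_l. apply Rmult_le_pos; apply Rlt_le, exp_pos.
Qed.

Lemma exp_neg_lt1 x : 0 < x -> 0 <= exp (- x) < 1.
Proof. intros. split. apply Rlt_le, exp_pos. rewrite <- exp_0. apply exp_increasing. lra. Qed.

Theorem proposition3p1 :
  forall tau : C, 0 < Im tau ->
  exists (Hq Hm0 Hm1 Th : C),
    has_sum_nat (H_term tau) Hq /\
    has_sum_Z2 (Hminus_term tau 0) Hm0 /\
    has_sum_Z2 (Hminus_term tau 1) Hm1 /\
    has_sum_Z2 (theta_term tau) Th /\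
    Cplus (Cmult (qpow tau (1/3)) Hq)
          (Cmult (RtoC (- / sqrt PI)) (Cminus Hm0 Hm1))
    = Cmult (Cdiv (cexp (Cmult Ci (RtoC (- PI / 3)))) 2) Th.
Proof.
  intros tau Hv.
  assert (Hpv : 0 < PI * Im tau) by (pose proof PI_RGT_0; nra).
  assert (Hr1 := exp_neg_lt1 _ Hpv).
  assert (Hr2 : 0 <= exp (- (2 * PI * Im tau)) < 1) by (apply exp_neg_lt1; lra).
  assert (HK : 0 <= sqrt PI * exp (PI * Im tau)) by (apply Rmult_le_pos; [apply sqrt_pos|apply Rlt_le, exp_pos]).
  destruct (tail_usum _ (geom_tail _ Hr1 (Hmt tau 0) _ HK (fun a b => Hmt_bound tau 0 a b Hv (or_introl eq_refl)))) as [Hm0 U0].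
  destruct (tail_usum _ (geom_tail _ Hr1 (Hmt tau 1) _ HK (fun a b => Hmt_bound tau 1 a b Hv (or_intror eq_refl)))) as [Hm1 U1].
  destruct (tail_usum _ (geom_tail _ Hr2 (Sp tau) 1 ltac:(lra) (fun a b => Sp_bound tau a b Hv))) as [Hq US].
  set (Th := Cplus (Cplus (Cmult (cS tau) Hq) (Cmult cA (Cminus Hm0 Hm1))) (Cmult cA (Cminus Hm0 Hm1))).
  assert (UT : has_usum (fun m => theta_term tau (fst m) (snd m)) Th).
  { apply (usum_ext (fun m => Cplus (Cplus (Sth tau m) (Ath tau m)) (Bth tau m))).
    { intros [m1 m2]. symmetry. apply theta_decomp; auto. }
    apply usum_plus. apply usum_plus.
    - apply (usum_ext (fun m => Cmult (cS tau) (Sp tau m))). { intros; symmetry; apply Sth_eq. }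
      apply usum_scal; auto.
    - apply usum_Ath; auto.
    - apply usum_Bth; auto. }
  exists Hq, Hm0, Hm1, Th.
  split. apply sumH_conv; auto.
  split. exact (usum_sq _ _ U0).
  split. exact (usum_sq _ _ U1).
  split. exact (usum_sq _ _ UT).
  unfold Th, cS, cA.
  set (w := cexp (Cmult Ci (RtoC (- PI / 3)))).
  set (z := cexp (Cmult Ci (RtoC (PI / 3)))).
  assert (Ewz : Cmult w z = RtoC 1).
  { unfold w, z. rewrite <- cexp_add. rewrite <- Cmult_plus_distr_l, <- RtoC_plus.
    replace (- PI / 3 + PI / 3) with 0 by field. rewrite Cmult_0_r. apply cexp_0. }
  unfold Cdiv.
  match goal with |- ?L = ?R => transitivity (Cmult (Cmult w z) L) end.
  rewrite Ewz. ring.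
  field.
Qed.
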